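(* Let $p=q=3$ and let $\mathcal V_{\mathrm{phys}}$ and the operators $\hat A_{ij},\hat B_{ij},\hat C_{ij}$ be as in the context. If $W\subset\mathcal V_{\mathrm{phys}}$ is a linear subspace, $W\neq\{0\}$, invariant under all $\hat A_{ij},\hat B_{ij},\hat C_{ij}$, then $W=\mathcal V_{\mathrm{phys}}$.
   Context: On smooth functions of $(\boldsymbol u,\boldsymbol v)\in\mathbb{R}^3\times\mathbb{R}^3$ define $\hat A_{ij}=-i(u_i\partial_{u_j}-u_j\partial_{u_i})$, $\hat B_{ij}=-i(v_i\partial_{v_j}-v_j\partial_{v_i})$, $\hat C_{ij}=u_iv_j+\partial_{u_i}\partial_{v_j}$ for $1\le i,j\le3$. With $u=|\boldsymbol u|$, $v=|\boldsymbol v|$, let $\Psi_{lmn}=j_l(uv)Y_{lm}(\boldsymbol u/u)Y_{ln}(\boldsymbol v/v)$ for integers $l\ge0$, $|m|\le l$, $|n|\le l$, where $j_l$ is the spherical Bessel function of the first kind and $Y_{lm}$ are the standard orthonormal spherical harmonics on $S^2$ (Condon–Shortley phase convention). Let $\mathcal V_{\mathrm{phys}}=\mathrm{span}\{\Psi_{lmn}\}$ (a space invariant under the operators above). *)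

(* Defs.v *)
From Stdlib Require Import Reals ZArith.
From Coquelicot Require Import Coquelicot.

Record R3 := mkR3 { c1 : R; c2 : R; c3 : R }.

(** coordinate i (1 <= i <= 3); junk value 0 otherwise *)
Definition coord (i : nat) (x : R3) : R :=
  match i with 1 => c1 x | 2 => c2 x | 3 => c3 x | _ => 0%R end.

Definition upd (x : R3) (i : nat) (t : R) : R3 :=
  match i with
  | 1 => mkR3 t (c2 x) (c3 x)
  | 2 => mkR3 (c1 x) t (c3 x)
  | 3 => mkR3 (c1 x) (c2 x) t
  | _ => x end.

Definition nrm (x : R3) : R := sqrt (c1 x ^ 2 + c2 x ^ 2 + c3 x ^ 2).
Definition rscale (a : R) (x : R3) : R3 := mkR3 (a * c1 x) (a * c2 x) (a * c3 x).

Definition Fun6 := R3 -> R3 -> C.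
Definition zeroF : Fun6 := fun _ _ => 0%C.

Definition dU (j : nat) (f : Fun6) : Fun6 := fun u v =>
  (Derive (fun t => Re (f (upd u j t) v)) (coord j u),
   Derive (fun t => Im (f (upd u j t) v)) (coord j u)).
Definition dV (j : nat) (f : Fun6) : Fun6 := fun u v =>
  (Derive (fun t => Re (f u (upd v j t))) (coord j v),
   Derive (fun t => Im (f u (upd v j t))) (coord j v)).

Open Scope C_scope.

Definition opA (i j : nat) (f : Fun6) : Fun6 := fun u v =>
  - Ci * (RtoC (coord i u) * dU j f u v - RtoC (coord j u) * dU i f u v).
Definition opB (i j : nat) (f : Fun6) : Fun6 := fun u v =>
  - Ci * (RtoC (coord i v) * dV j f u v - RtoC (coord j v) * dV i f u v).
Definition opC (i j : nat) (f : Fun6) : Fun6 := fun u v =>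
  RtoC (coord i u * coord j v) * f u v + dU i (dV j f) u v.

Close Scope C_scope.

Fixpoint cpow (z : C) (n : nat) : C :=
  match n with O => RtoC 1 | S k => Cmult z (cpow z k) end.

(** odfact n = (2n+1)!! *)
Fixpoint odfact (n : nat) : nat :=
  match n with O => 1%nat | S k => ((2 * k + 3) * odfact k)%nat end.

(** jt l x = j_l(x) / x^l = sum_k (-1)^k x^(2k) / (2^k k! (2l+2k+1)!!) *)
Definition jt_coef (l n : nat) : R :=
  if Nat.even n then
    ((-1) ^ (n / 2) / (2 ^ (n / 2) * INR (fact (n / 2)) * INR (odfact (l + n / 2))))%R
  else 0%R.
Definition jt (l : nat) (x : R) : R := PSeries (jt_coef l) x.

Definition sph_j (l : nat) (x : R) : R := (x ^ l * jt l x)%R.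

Definition legendre (l : nat) (x : R) : R :=
  (/ (2 ^ l * INR (fact l)) * Derive_n (fun t => (t ^ 2 - 1) ^ l) l x)%R.
Definition dlegendre (l m : nat) (x : R) : R := Derive_n (legendre l) m x.

Definition Ynorm (l m : nat) : R :=
  sqrt ((2 * INR l + 1) / (4 * PI) * INR (fact (l - m)) / INR (fact (l + m))).

(** Orthonormal spherical harmonic Y_lm at a unit vector w (Condon-Shortley):
    for m >= 0, Y_lm = N (-1)^m (w1 + i w2)^m P_l^(m)(w3)
      [= N P_l^m(cos th) e^{i m phi}, P_l^m = (-1)^m (1-x^2)^{m/2} P_l^(m)];
    for m < 0, Y_lm = (-1)^|m| conj(Y_{l,|m|}) = N (w1 - i w2)^|m| P_l^(|m|)(w3). *)
Definition Ylm (l : nat) (m : Z) (w : R3) : C :=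
  let a := Z.abs_nat m in
  if (0 <=? m)%Z then
    Cmult (RtoC (Ynorm l a * (-1) ^ a * dlegendre l a (c3 w)))
          (cpow (c1 w, c2 w) a)
  else
    Cmult (RtoC (Ynorm l a * dlegendre l a (c3 w)))
          (cpow (c1 w, (- c2 w)%R) a).

(** solid harmonic |x|^l Y_lm(x/|x|), written so that it is the (polynomial)
    continuous extension at x = 0 *)
Definition solidY (l : nat) (m : Z) (x : R3) : C :=
  let a := Z.abs_nat m in
  let r := nrm x in
  if (0 <=? m)%Z then
    Cmult (RtoC (Ynorm l a * (-1) ^ a * r ^ (l - a) * dlegendre l a (c3 x / r)))
          (cpow (c1 x, c2 x) a)
  else
    Cmult (RtoC (Ynorm l a * r ^ (l - a) * dlegendre l a (c3 x / r)))
          (cpow (c1 x, (- c2 x)%R) a).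

(** Psi_lmn(u,v) = j_l(|u||v|) Y_lm(u/|u|) Y_ln(v/|v|) for u, v <> 0,
    extended by continuity (smoothly) to u = 0 or v = 0. *)
Definition Psi (l : nat) (m n : Z) : Fun6 := fun u v =>
  let s := (nrm u * nrm v)%R in
  if Req_EM_T s 0 then
    Cmult (RtoC (jt l s)) (Cmult (solidY l m u) (solidY l n v))
  else
    Cmult (RtoC (sph_j l s))
          (Cmult (Ylm l m (rscale (/ nrm u) u)) (Ylm l n (rscale (/ nrm v) v))).

Definition valid_lmn (l : nat) (m n : Z) : Prop :=
  (Z.abs m <= Z.of_nat l)%Z /\ (Z.abs n <= Z.of_nat l)%Z.

Inductive Vphys : Fun6 -> Prop :=
| Vphys0 : Vphys zeroF
| Vphys_step (l : nat) (m n : Z) (c : C) (f : Fun6) :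
    valid_lmn l m n -> Vphys f ->
    Vphys (fun u v => Cplus (Cmult c (Psi l m n u v)) (f u v)).

Definition is_subspace (W : Fun6 -> Prop) : Prop :=
  W zeroF /\
  (forall f g, W f -> W g -> W (fun u v => Cplus (f u v) (g u v))) /\
  (forall (c : C) f, W f -> W (fun u v => Cmult c (f u v))).

(* Main.v *)
Require Import Defs.
From Stdlib Require Import Reals ZArith.
From Coquelicot Require Import Coquelicot.
From Stdlib Require Import Lra Lia FunctionalExtensionality List Classical.
Import Defs.
Open Scope R_scope.

Lemma dR_const (a x : R) : is_derive (fun _ => a) x 0.
Proof. apply (is_derive_const (K:=R_AbsRing) (V:=R_NormedModule)). Qed.
Lemma dR_id (x : R) : is_derive (fun t => t) x 1.
Proof. apply (is_derive_id (K:=R_AbsRing)). Qed.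
Lemma dR_plus f g (x a b : R) : is_derive f x a -> is_derive g x b -> is_derive (fun t => f t + g t) x (a + b).
Proof. intros; now apply (is_derive_plus (K:=R_AbsRing) (V:=R_NormedModule)). Qed.
Lemma dR_minus f g (x a b : R) : is_derive f x a -> is_derive g x b -> is_derive (fun t => f t - g t) x (a - b).
Proof. intros; now apply (is_derive_minus (K:=R_AbsRing) (V:=R_NormedModule)). Qed.
Lemma dR_mult f g (x a b : R) : is_derive f x a -> is_derive g x b -> is_derive (fun t => f t * g t) x (a * g x + f x * b).
Proof. intros; apply (is_derive_mult (K:=R_AbsRing)); auto. intros; apply Rmult_comm. Qed.
Lemma dR_comp f g (x a b : R) : is_derive f (g x) a -> is_derive g x b -> is_derive (fun t => f (g t)) x (b * a).
Proof. intros; now apply (is_derive_comp (K:=R_AbsRing) (V:=R_NormedModule)). Qed.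
Lemma dR_ext f g (x a : R) : (forall t, f t = g t) -> is_derive f x a -> is_derive g x a.
Proof. intros; now apply (is_derive_ext f g). Qed.
Lemma dR_eq f (x a b : R) : a = b -> is_derive f x a -> is_derive f x b.
Proof. intros ->; auto. Qed.
Lemma dR_pow f (x a : R) n : is_derive f x a -> is_derive (fun t => f t ^ n) x (INR n * f x ^ (pred n) * a).
Proof. intros H. eapply dR_eq. 2: apply (is_derive_pow f n x a H). ring. Qed.
Lemma dR_sqrt f (x a : R) : is_derive f x a -> 0 < f x -> is_derive (fun t => sqrt (f t)) x (a / (2 * sqrt (f x))).
Proof. intros; now apply is_derive_sqrt. Qed.
Lemma dR_inv f (x a : R) : is_derive f x a -> f x <> 0 -> is_derive (fun t => / f t) x (- a / f x ^ 2).
Proof. intros; now apply is_derive_inv. Qed.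

Definition cder (h : R -> C) (t : R) (z : C) : Prop :=
  is_derive (fun s => Re (h s)) t (Re z) /\ is_derive (fun s => Im (h s)) t (Im z).

Lemma cder_ext (h k : R -> C) t z : (forall s, h s = k s) -> cder h t z -> cder k t z.
Proof.
  intros E [H1 H2]; split.
  - apply (dR_ext (fun s => Re (h s))); [intros; now rewrite E|exact H1].
  - apply (dR_ext (fun s => Im (h s))); [intros; now rewrite E|exact H2].
Qed.

Lemma cder_eq h t a b : a = b -> cder h t a -> cder h t b.
Proof. intros ->; auto. Qed.

Lemma cder_const (c : C) t : cder (fun _ => c) t 0%C.
Proof. split; simpl; apply dR_const. Qed.

Lemma cder_RtoC (f : R -> R) t d : is_derive f t d -> cder (fun s => RtoC (f s)) t (RtoC d).
Proof. intros H; split; simpl; [exact H| apply dR_const]. Qed.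

Lemma cder_plus h k t a b : cder h t a -> cder k t b -> cder (fun s => (h s + k s)%C) t (a + b)%C.
Proof.
  intros [H1 H2] [K1 K2]; split; simpl.
  - apply (dR_plus (fun s => Re (h s)) (fun s => Re (k s))); auto.
  - apply (dR_plus (fun s => Im (h s)) (fun s => Im (k s))); auto.
Qed.

Lemma cder_mult h k t a b : cder h t a -> cder k t b ->
  cder (fun s => (h s * k s)%C) t (a * k t + h t * b)%C.
Proof.
  intros [H1 H2] [K1 K2]; split.
  - pose proof (dR_minus _ _ _ _ _ (dR_mult _ _ _ _ _ H1 K1) (dR_mult _ _ _ _ _ H2 K2)) as D.
    eapply dR_eq; [|exact D]. unfold Re, Im; simpl; ring.
  - pose proof (dR_plus _ _ _ _ _ (dR_mult _ _ _ _ _ H1 K2) (dR_mult _ _ _ _ _ H2 K1)) as D.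
    eapply dR_eq; [|exact D]. unfold Re, Im; simpl; ring.
Qed.

Lemma cder_scal (c : C) h t a : cder h t a -> cder (fun s => (c * h s)%C) t (c * a)%C.
Proof.
  intros H. eapply cder_eq. 2: apply (cder_mult (fun _ => c) h t 0%C a); auto using cder_const.
  cbv beta. ring.
Qed.

Lemma cpow_S z n : cpow z (S n) = (z * cpow z n)%C.
Proof. reflexivity. Qed.

Lemma cder_cpow h t a n : cder h t a ->
  cder (fun s => cpow (h s) n) t (RtoC (INR n) * cpow (h t) (pred n) * a)%C.
Proof.
  intros H; induction n.
  - simpl. eapply cder_eq. 2: apply cder_const. ring.
  - simpl cpow. eapply cder_eq. 2: apply cder_mult; eauto.
    cbv beta. destruct n as [|n]; [simpl; ring|]. simpl pred. rewrite cpow_S. rewrite (S_INR (S n)), RtoC_plus. ring.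
Qed.

Lemma cder_Derive h t z : cder h t z ->
  (Derive (fun s => Re (h s)) t, Derive (fun s => Im (h s)) t) = z.
Proof.
  intros [H1 H2].
  assert (E1 : Derive (fun s => Re (h s)) t = Re z) by (apply is_derive_unique; exact H1).
  assert (E2 : Derive (fun s => Im (h s)) t = Im z) by (apply is_derive_unique; exact H2).
  rewrite E1, E2.
  destruct z; reflexivity.
Qed.


Lemma coord_upd_same x j t : (1 <= j <= 3)%nat -> coord j (upd x j t) = t.
Proof. intros Hj. destruct j as [|[|[|[|]]]]; simpl; try reflexivity; lia. Qed.

Lemma coord_upd_other x j k t : (1 <= j <= 3)%nat -> k <> j -> coord k (upd x j t) = coord k x.
Proof.
  intros Hj Hk. destruct j as [|[|[|[|]]]]; try lia;
  destruct k as [|[|[|[|]]]]; simpl; try reflexivity; lia.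
Qed.

Lemma upd_coord x j : upd x j (coord j x) = x.
Proof. destruct x; destruct j as [|[|[|[|]]]]; reflexivity. Qed.

Definition origin : R3 := mkR3 0 0 0.
Definition nsq (x : R3) : R := c1 x ^ 2 + c2 x ^ 2 + c3 x ^ 2.
Definition zeta (x : R3) : C := (c1 x, c2 x).
Definition zetab (x : R3) : C := (c1 x, - c2 x).

Lemma nsq_upd x j t : (1 <= j <= 3)%nat ->
  nsq (upd x j t) = nsq x - coord j x ^ 2 + t ^ 2.
Proof. intros Hj. destruct x; destruct j as [|[|[|[|]]]]; try lia; unfold nsq; simpl; ring. Qed.

Lemma nsq_ge0 x : 0 <= nsq x.
Proof. unfold nsq. nra. Qed.

Lemma nsq_eq0 x : nsq x = 0 -> x = origin.
Proof.
  destruct x as [a b c]; unfold nsq; simpl; intros H.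
  assert (a = 0) by nra. assert (b = 0) by nra. assert (c = 0) by nra. subst; reflexivity.
Qed.

Lemma nsq_pos x : x <> origin -> 0 < nsq x.
Proof.
  intros H. destruct (Rle_lt_or_eq_dec 0 (nsq x) (nsq_ge0 x)) as [h|h]; auto.
  exfalso; apply H, nsq_eq0; auto.
Qed.

Lemma nrm_pos x : x <> origin -> 0 < nrm x.
Proof. intros H. apply sqrt_lt_R0, nsq_pos, H. Qed.

Lemma nrm_sq x : nrm x ^ 2 = nsq x.
Proof. unfold nrm. rewrite <- Rsqr_pow2. apply Rsqr_sqrt, nsq_ge0. Qed.

Definition hasPD (j : nat) (g : R3 -> C) (x : R3) (z : C) : Prop :=
  cder (fun t => g (upd x j t)) (coord j x) z.
Definition hasPDr (j : nat) (g : R3 -> R) (x : R3) (d : R) : Prop :=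
  is_derive (fun t => g (upd x j t)) (coord j x) d.
Definition pdC (j : nat) (g : R3 -> C) (x : R3) : C :=
  (Derive (fun t => Re (g (upd x j t))) (coord j x), Derive (fun t => Im (g (upd x j t))) (coord j x)).

Lemma pdC_val j g x z : hasPD j g x z -> pdC j g x = z.
Proof. intros H. apply (cder_Derive _ _ _ H). Qed.

Lemma hasPD_ext j g h x z : (forall y, g y = h y) -> hasPD j g x z -> hasPD j h x z.
Proof. intros E H. eapply cder_ext; [|exact H]. intros; simpl; auto. Qed.

Lemma hasPD_eq j g x a b : a = b -> hasPD j g x a -> hasPD j g x b.
Proof. intros ->; auto. Qed.

Lemma hasPD_plus j g h x a b : hasPD j g x a -> hasPD j h x b ->
  hasPD j (fun y => (g y + h y)%C) x (a + b)%C.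
Proof. intros; apply (cder_plus (fun t => g (upd x j t)) (fun t => h (upd x j t))); auto. Qed.

Lemma hasPD_mult j g h x a b : (1 <= j <= 3)%nat -> hasPD j g x a -> hasPD j h x b ->
  hasPD j (fun y => (g y * h y)%C) x (a * h x + g x * b)%C.
Proof.
  intros Hj Ha Hb. unfold hasPD.
  pose proof (cder_mult (fun t => g (upd x j t)) (fun t => h (upd x j t)) _ _ _ Ha Hb) as H.
  simpl in H. rewrite upd_coord in H. exact H.
Qed.

Lemma hasPD_const j (c : C) x : hasPD j (fun _ => c) x 0%C.
Proof. apply cder_const. Qed.

Lemma hasPD_scal j (c : C) g x a : hasPD j g x a -> hasPD j (fun y => (c * g y)%C) x (c * a)%C.
Proof. intros; apply (cder_scal c (fun t => g (upd x j t))); auto. Qed.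

Lemma hasPD_RtoC j f x d : hasPDr j f x d -> hasPD j (fun y => RtoC (f y)) x (RtoC d).
Proof. intros H; apply (cder_RtoC (fun t => f (upd x j t))); auto. Qed.

Lemma hasPD_cpow j g x a n : (1 <= j <= 3)%nat -> hasPD j g x a ->
  hasPD j (fun y => cpow (g y) n) x (RtoC (INR n) * cpow (g x) (pred n) * a)%C.
Proof.
  intros Hj H. pose proof (cder_cpow (fun t => g (upd x j t)) _ _ n H) as K.
  simpl in K; rewrite upd_coord in K; exact K.
Qed.

Lemma hasPDr_coord j k x : (1 <= j <= 3)%nat ->
  hasPDr j (coord k) x (if Nat.eqb k j then 1 else 0).
Proof.
  intros Hj. unfold hasPDr. destruct (Nat.eqb_spec k j).
  - subst. apply (dR_ext (fun t => t)). intros; now rewrite coord_upd_same. apply dR_id.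
  - apply (dR_ext (fun t => coord k x)). intros; now rewrite coord_upd_other. apply dR_const.
Qed.

Lemma hasPDr_nsq j x : (1 <= j <= 3)%nat -> hasPDr j nsq x (2 * coord j x).
Proof.
  intros Hj. unfold hasPDr.
  apply (dR_ext (fun t => nsq x - coord j x ^ 2 + t ^ 2)). intros; now rewrite nsq_upd.
  eapply dR_eq. 2: apply dR_plus; [apply dR_const| apply dR_pow, dR_id]. simpl; ring.
Qed.

Lemma hasPDr_comp j (G : R -> R) f x d dG : hasPDr j f x d -> is_derive G (f x) dG ->
  hasPDr j (fun y => G (f y)) x (dG * d).
Proof.
  intros H1 H2. unfold hasPDr in *.
  assert (H2' : is_derive G ((fun t => f (upd x j t)) (coord j x)) dG) by (simpl; rewrite upd_coord; exact H2).
  pose proof (dR_comp _ _ _ _ _ H2' H1) as D. eapply dR_eq; [|exact D]. ring.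
Qed.

Lemma hasPDr_mult j f g x a b : hasPDr j f x a -> hasPDr j g x b ->
  hasPDr j (fun y => f y * g y) x (a * g x + f x * b).
Proof.
  intros H1 H2. unfold hasPDr in *. pose proof (dR_mult _ _ _ _ _ H1 H2) as K.
  cbv beta in K. rewrite upd_coord in K. exact K.
Qed.

Lemma hasPDr_plus j f g x a b : hasPDr j f x a -> hasPDr j g x b ->
  hasPDr j (fun y => f y + g y) x (a + b).
Proof. intros H1 H2. apply (dR_plus _ _ _ _ _ H1 H2). Qed.

Lemma hasPDr_const j (c : R) x : hasPDr j (fun _ => c) x 0.
Proof. unfold hasPDr. apply (dR_const c). Qed.

Lemma hasPDr_ext j f g x d : (forall y, f y = g y) -> hasPDr j f x d -> hasPDr j g x d.
Proof. intros E H. eapply dR_ext; [|exact H]. intros; simpl; auto. Qed.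

Lemma hasPDr_eq j f x a b : a = b -> hasPDr j f x a -> hasPDr j f x b.
Proof. intros ->; auto. Qed.

Lemma hasPD_zeta1 x : hasPD 1 zeta x 1%C.
Proof. split; simpl; [apply dR_id|apply dR_const]. Qed.
Lemma hasPD_zeta2 x : hasPD 2 zeta x Ci.
Proof. split; simpl; [apply dR_const|apply dR_id]. Qed.
Lemma hasPD_zeta3 x : hasPD 3 zeta x 0%C.
Proof. split; simpl; apply dR_const. Qed.
Lemma hasPD_zetab1 x : hasPD 1 zetab x 1%C.
Proof. split; simpl; [apply dR_id|apply dR_const]. Qed.
Lemma hasPD_zetab2 x : hasPD 2 zetab x (- Ci)%C.
Proof.
  split; simpl.
  - eapply dR_eq; [|apply (dR_const (c1 x))]. ring.
  - pose proof (dR_minus (fun _ => 0) (fun t => t) (c2 x) 0 1 (dR_const 0 _) (dR_id _)) as D.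
    apply (dR_ext (fun t => 0 - t)); [intros; simpl; ring|]. eapply dR_eq; [|exact D]. ring.
Qed.
Lemma hasPD_zetab3 x : hasPD 3 zetab x 0%C.
Proof. split; simpl; apply dR_const. Qed.

Fixpoint pe (p : nat -> R) (d : nat) (x : R) : R :=
  match d with 0 => 0 | S d' => pe p d' x + p d' * x ^ d' end.
Definition dco (p : nat -> R) (k : nat) : R := INR (S k) * p (S k).
Fixpoint dcon (n : nat) (p : nat -> R) : nat -> R :=
  match n with 0 => p | S n' => dco (dcon n' p) end.
Definition vanish (p : nat -> R) (N : nat) := forall k, (N <= k)%nat -> p k = 0.

Lemma pe_deriv p d x : is_derive (pe p (S d)) x (pe (dco p) d x).
Proof.
  induction d.
  - simpl. apply (dR_ext (fun _ => p 0%nat)). intros; simpl; ring. apply dR_const.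
  - apply (dR_ext (fun t => pe p (S d) t + p (S d) * t ^ (S d))). intros; reflexivity.
    eapply dR_eq. 2: apply dR_plus; [exact IHd|]. 2: apply (is_derive_scal (fun t => t ^ S d)), dR_pow, dR_id.
    cbn [pe pred]. unfold dco. ring.
Qed.

Lemma pe_vanish p N x : vanish p N -> forall e, pe p (N + e) x = pe p N x.
Proof.
  intros H e; induction e.
  - now rewrite Nat.add_0_r.
  - rewrite Nat.add_succ_r. simpl. rewrite IHe, H by lia. ring.
Qed.

Lemma pe_deriv' p N x : vanish p N -> is_derive (pe p N) x (pe (dco p) N x).
Proof.
  intros H. apply (dR_ext (pe p (S N))).
  - intros t. replace (S N) with (N + 1)%nat by lia. apply pe_vanish, H.
  - apply pe_deriv.
Qed.

Lemma dco_vanish p N : vanish p N -> vanish (dco p) N.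
Proof. intros H k Hk. unfold dco. rewrite H by lia. ring. Qed.

Lemma dcon_vanish p N n : vanish p N -> vanish (dcon n p) N.
Proof. intros H; induction n; simpl; auto using dco_vanish. Qed.

Lemma Derive_n_pe p N n x : vanish p N -> Derive_n (pe p N) n x = pe (dcon n p) N x.
Proof.
  intros H. revert x; induction n; intros x; simpl; auto.
  rewrite (Derive_ext _ (pe (dcon n p) N)) by (intros; apply IHn).
  apply is_derive_unique, pe_deriv', dcon_vanish, H.
Qed.

Lemma dcon_add k l p : dcon k (dcon l p) = dcon (k + l) p.
Proof. induction k; simpl; auto. now rewrite IHk. Qed.

Lemma dcon_coef n p k : dcon n p k = INR (fact (k + n)) / INR (fact k) * p (k + n)%nat.
Proof.
  revert k; induction n; intros k.
  - rewrite Nat.add_0_r. simpl dcon. unfold Rdiv. rewrite Rinv_r; [ring|apply INR_fact_neq_0].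
  - simpl dcon. unfold dco. rewrite IHn. replace (S k + n)%nat with (k + S n)%nat by lia.
    rewrite (fact_simpl k). rewrite mult_INR.
    assert (INR (fact k) <> 0) by apply INR_fact_neq_0.
    assert (INR (S k) <> 0) by (apply not_0_INR; lia).
    unfold Rdiv. rewrite Rinv_mult. 
    transitivity (INR (fact (k + S n)) * / INR (fact k) * p (k + S n)%nat * (INR (S k) * / INR (S k))); [ring|].
    rewrite Rinv_r by auto. ring.
Qed.

Lemma pe_const p d x : (forall k, (1 <= k)%nat -> p k = 0) -> pe p (S d) x = p 0%nat.
Proof.
  intros H; induction d.
  - simpl. ring.
  - change (pe p (S d) x + p (S d) * x ^ (S d) = p 0%nat). rewrite IHd, (H (S d)) by lia. ring.
Qed.

Lemma pe_zero p d x : (forall k, p k = 0) -> pe p d x = 0.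
Proof. intros H; induction d; simpl; auto. rewrite IHd, H; ring. Qed.

Lemma pe_minus p q d x : pe (fun k => p k - q k) d x = pe p d x - pe q d x.
Proof. induction d; simpl; [ring|]. rewrite IHd; ring. Qed.

Definition sh2 (p : nat -> R) (k : nat) : R :=
  match k with 0 | 1 => 0 | S (S k') => p k' end.

Lemma pe_sh2 p d x : pe (sh2 p) (S (S d)) x = x ^ 2 * pe p d x.
Proof. induction d; simpl in *; [ring|]. rewrite IHd. simpl. ring. Qed.

(* coefficients of (x^2-1)^l *)
Fixpoint wc (l : nat) : nat -> R :=
  match l with
  | 0 => fun k => if Nat.eqb k 0 then 1 else 0
  | S l' => fun k => sh2 (wc l') k - wc l' k
  end.

Lemma wc_vanish l : vanish (wc l) (2 * l + 1).
Proof.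
  induction l; intros k Hk; simpl.
  - destruct k; [lia|reflexivity].
  - rewrite IHl by lia. unfold sh2. destruct k as [|[|k]]; try lia. rewrite IHl by lia. ring.
Qed.

Lemma wc_top l : wc l (2 * l)%nat = 1.
Proof.
  induction l; [reflexivity|].
  change (wc (S l) (2 * S l)%nat) with (sh2 (wc l) (2 * S l)%nat - wc l (2 * S l)%nat).
  replace (2 * S l)%nat with (S (S (2 * l))) by lia.
  rewrite (wc_vanish l (S (S (2 * l)))) by lia. cbn [sh2]. rewrite IHl. ring.
Qed.

Lemma wc_eval l x : pe (wc l) (2 * l + 1) x = (x ^ 2 - 1) ^ l.
Proof.
  induction l.
  - simpl. ring.
  - simpl wc. rewrite pe_minus. replace (2 * S l + 1)%nat with (S (S (2 * l + 1))) by lia.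
    rewrite pe_sh2, IHl.
    replace (S (S (2 * l + 1))) with (2 * l + 1 + 2)%nat by lia.
    rewrite pe_vanish by apply wc_vanish. rewrite IHl. simpl. ring.
Qed.

Definition cl (l : nat) : R := / (2 ^ l * INR (fact l)).
Definition Wn (l n : nat) (x : R) : R := pe (dcon n (wc l)) (2 * l + 1) x.

Lemma Derive_n_w l n x : Derive_n (fun t => (t ^ 2 - 1) ^ l) n x = Wn l n x.
Proof.
  unfold Wn. rewrite <- Derive_n_pe by apply wc_vanish.
  apply Derive_n_ext. intros; now rewrite wc_eval.
Qed.

Lemma Wn_deriv l n x : is_derive (Wn l n) x (Wn l (S n) x).
Proof. unfold Wn. apply pe_deriv'. apply dcon_vanish, wc_vanish. Qed.

Lemma legendre_eq l x : legendre l x = cl l * Wn l l x.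
Proof. unfold legendre, cl. now rewrite Derive_n_w. Qed.

Lemma dlegendre_eq l k x : dlegendre l k x = cl l * Wn l (k + l) x.
Proof.
  unfold dlegendre.
  rewrite (Derive_n_ext (legendre l) (fun t => cl l * Wn l l t)) by (intros; apply legendre_eq).
  rewrite Derive_n_scal_l. f_equal. unfold Wn at 1.
  rewrite Derive_n_pe by apply dcon_vanish, wc_vanish. unfold Wn. now rewrite dcon_add.
Qed.

Lemma dlegendre_deriv l k x : is_derive (dlegendre l k) x (dlegendre l (S k) x).
Proof.
  apply (dR_ext (fun t => cl l * Wn l (k + l) t)). intros; now rewrite dlegendre_eq.
  rewrite dlegendre_eq. simpl. apply is_derive_scal, Wn_deriv.
Qed.

Lemma dlegendre_top l x : dlegendre l (S l) x = 0.
Proof.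
  rewrite dlegendre_eq. unfold Wn. rewrite pe_zero. ring.
  intros k. rewrite dcon_coef. rewrite wc_vanish by lia. ring.
Qed.

Lemma dlegendre_high l k x : (l < k)%nat -> dlegendre l k x = 0.
Proof.
  intros H. rewrite dlegendre_eq. unfold Wn. rewrite pe_zero. ring.
  intros j. rewrite dcon_coef. rewrite wc_vanish by lia. ring.
Qed.

Lemma dlegendre_diag l x : dlegendre l l x = cl l * INR (fact (2 * l)).
Proof.
  rewrite dlegendre_eq. unfold Wn. replace (2 * l + 1)%nat with (S (2 * l)) by lia.
  rewrite pe_const.
  - rewrite dcon_coef. replace (0 + (l + l))%nat with (2 * l)%nat by lia. rewrite wc_top.
    simpl (fact 0). simpl INR. field.
  - intros k Hk. rewrite dcon_coef. rewrite wc_vanish by lia. ring.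
Qed.

Lemma cl_pos l : 0 < cl l.
Proof. unfold cl. apply Rinv_0_lt_compat, Rmult_lt_0_compat. apply pow_lt; lra. apply INR_fact_lt_0. Qed.

Lemma dlegendre_diag_neq l x : dlegendre l l x <> 0.
Proof.
  rewrite dlegendre_diag. apply Rmult_integral_contrapositive. split.
  apply Rgt_not_eq, cl_pos. apply INR_fact_neq_0.
Qed.

Lemma zero_deriv (F : R -> R) x d : (forall t, F t = 0) -> is_derive F x d -> d = 0.
Proof.
  intros HF HD. assert (HD' : is_derive (fun _ => 0) x d) by (eapply dR_ext; [|exact HD]; auto).
  rewrite <- (is_derive_unique _ _ _ HD'). apply is_derive_unique, dR_const.
Qed.

Lemma ode_base l x : (x ^ 2 - 1) * Wn l 1 x - 2 * INR l * x * Wn l 0 x = 0.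
Proof.
  assert (H : is_derive (Wn l 0) x (INR l * (x ^ 2 - 1) ^ pred l * (2 * x))).
  { apply (dR_ext (fun t => (t ^ 2 - 1) ^ l)).
    intros t. unfold Wn. simpl dcon. now rewrite wc_eval.
    apply (dR_pow (fun t => t ^ 2 - 1)). eapply dR_eq. 2: apply (dR_minus (fun t => t ^ 2) (fun _ => 1)); [apply (dR_pow (fun t => t)), dR_id|apply dR_const]. simpl; ring. }
  pose proof (is_derive_unique _ _ _ H) as E1.
  pose proof (is_derive_unique _ _ _ (Wn_deriv l 0 x)) as E2.
  rewrite E1 in E2. rewrite <- E2.
  replace (Wn l 0 x) with ((x ^ 2 - 1) ^ l) by (unfold Wn; simpl dcon; now rewrite wc_eval).
  destruct l. simpl. ring. simpl pred. simpl. ring.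
Qed.

Lemma ode_step l n (b c : R) :
  (forall x, (x ^ 2 - 1) * Wn l (S (S n)) x + b * x * Wn l (S n) x + c * Wn l n x = 0) ->
  forall x, (x ^ 2 - 1) * Wn l (S (S (S n))) x + (b + 2) * x * Wn l (S (S n)) x + (b + c) * Wn l (S n) x = 0.
Proof.
  intros H x.
  assert (D : is_derive (fun t => (t ^ 2 - 1) * Wn l (S (S n)) t + b * t * Wn l (S n) t + c * Wn l n t) x
     ((x ^ 2 - 1) * Wn l (S (S (S n))) x + (b + 2) * x * Wn l (S (S n)) x + (b + c) * Wn l (S n) x)).
  { eapply dR_eq. 2: apply dR_plus; [apply dR_plus|].
    2: apply dR_mult; [eapply dR_minus; [apply dR_pow, dR_id|apply dR_const]|apply Wn_deriv].
    2: apply dR_mult; [apply (is_derive_scal (fun t => t)), dR_id|apply Wn_deriv].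
    2: apply (is_derive_scal (Wn l n)), Wn_deriv.
    simpl. ring. }
  exact (zero_deriv _ _ _ H D).
Qed.

Lemma ode_first l x : (x ^ 2 - 1) * Wn l 2 x + (2 - 2 * INR l) * x * Wn l 1 x + (- 2 * INR l) * Wn l 0 x = 0.
Proof.
  assert (D : is_derive (fun t => (t ^ 2 - 1) * Wn l 1 t - 2 * INR l * t * Wn l 0 t) x
     ((x ^ 2 - 1) * Wn l 2 x + (2 - 2 * INR l) * x * Wn l 1 x + (- 2 * INR l) * Wn l 0 x)).
  { eapply dR_eq. 2: apply dR_minus.
    2: apply dR_mult; [eapply dR_minus; [apply dR_pow, dR_id|apply dR_const]|apply Wn_deriv].
    2: apply dR_mult; [apply (is_derive_scal (fun t => t)), dR_id|apply Wn_deriv].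
    simpl. ring. }
  exact (zero_deriv _ _ _ (ode_base l) D).
Qed.

Lemma ode_W l n x : (x ^ 2 - 1) * Wn l (S (S n)) x + (2 * INR (S n) - 2 * INR l) * x * Wn l (S n) x
   + INR (S n) * (INR n - 2 * INR l) * Wn l n x = 0.
Proof.
  revert x; induction n; intros x.
  - pose proof (ode_first l x). simpl INR. replace (2 * 1 - 2 * INR l) with (2 - 2 * INR l) by ring.
    replace (1 * (0 - 2 * INR l)) with (- 2 * INR l) by ring. exact H.
  - pose proof (ode_step l n _ _ IHn x) as K.
    replace (2 * INR (S (S n)) - 2 * INR l) with (2 * INR (S n) - 2 * INR l + 2) by (rewrite (S_INR (S n)); ring).
    replace (INR (S (S n)) * (INR (S n) - 2 * INR l)) with
      (2 * INR (S n) - 2 * INR l + INR (S n) * (INR n - 2 * INR l)) by (rewrite (S_INR (S n)), (S_INR n); ring).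
    exact K.
Qed.

Lemma legendre_ode l k x :
  (x ^ 2 - 1) * dlegendre l (S (S k)) x + 2 * INR (S k) * x * dlegendre l (S k) x
  + (INR k * INR (S k) - INR l * INR (S l)) * dlegendre l k x = 0.
Proof.
  rewrite !dlegendre_eq. pose proof (ode_W l (k + l) x) as H.
  replace (S (S k) + l)%nat with (S (S (k + l))) by lia.
  replace (S k + l)%nat with (S (k + l)) by lia.
  replace (2 * INR (S (k + l)) - 2 * INR l) with (2 * INR (S k)) in H
    by (rewrite !S_INR, plus_INR; ring).
  replace (INR (S (k + l)) * (INR (k + l) - 2 * INR l)) with (INR k * INR (S k) - INR l * INR (S l)) in H
    by (rewrite !S_INR, plus_INR; ring).
  transitivity (cl l * ((x ^ 2 - 1) * Wn l (S (S (k + l))) x + 2 * INR (S k) * x * Wn l (S (k + l)) x +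
     (INR k * INR (S k) - INR l * INR (S l)) * Wn l (k + l) x)); [ring|]. rewrite H. ring.
Qed.

Definition ja (l k : nat) : R := (-1) ^ k / (2 ^ k * INR (fact k) * INR (odfact (l + k))).
Definition J (l : nat) (y : R) : R := PSeries (ja l) y.

Lemma odfact_pos n : (0 < odfact n)%nat.
Proof. induction n; simpl; lia. Qed.
Lemma odfact_neq n : INR (odfact n) <> 0.
Proof. apply not_0_INR. pose proof (odfact_pos n). lia. Qed.
Lemma odfact_S n : INR (odfact (S n)) = (2 * INR n + 3) * INR (odfact n).
Proof. change (odfact (S n)) with ((2 * n + 3) * odfact n)%nat. rewrite mult_INR, plus_INR, mult_INR. simpl. ring. Qed.

Lemma ja_neq l k : ja l k <> 0.
Proof.
  assert (A: 2^k * INR (fact k) * INR (odfact (l+k)) <> 0).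
  { repeat apply Rmult_integral_contrapositive_currified; [apply pow_nonzero; lra| apply INR_fact_neq_0| apply odfact_neq]. }
  unfold ja, Rdiv. apply Rmult_integral_contrapositive_currified; [apply pow_nonzero; lra| apply Rinv_neq_0_compat; exact A].
Qed.

Lemma ja_ratio l k : ja l (S k) / ja l k = - / (2 * INR (S k) * (2 * INR (l + k) + 3)).
Proof.
  unfold ja. rewrite Nat.add_succ_r. rewrite odfact_S. rewrite fact_simpl, mult_INR.
  assert (INR (fact k) <> 0) by apply INR_fact_neq_0.
  assert (INR (odfact (l + k)) <> 0) by apply odfact_neq.
  assert (INR (S k) <> 0) by (apply not_0_INR; lia).
  assert (2 * INR (l + k) + 3 <> 0) by (pose proof (pos_INR (l + k)); lra).
  assert (2 ^ k <> 0) by (apply pow_nonzero; lra).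
  assert ((-1) ^ k <> 0) by (apply pow_nonzero; lra).
  simpl pow. field. repeat split; auto.
Qed.

Lemma ja_radius l : CV_radius (ja l) = p_infty.
Proof.
  apply CV_radius_infinite_DAlembert. apply ja_neq.
  apply (is_lim_seq_le_le (fun _ => 0) _ (fun n => / INR (S n))).
  - intros n. rewrite ja_ratio. rewrite Rabs_Ropp.
    pose proof (pos_INR (l + n)). pose proof (lt_0_INR (S n) ltac:(lia)).
    rewrite Rabs_pos_eq.
    + split. apply Rlt_le, Rinv_0_lt_compat. nra.
      apply Rinv_le_contravar; nra.
    + apply Rlt_le, Rinv_0_lt_compat. nra.
  - apply is_lim_seq_const.
  - apply (is_lim_seq_incr_1 (fun n => / INR n)). replace (Finite 0) with (Rbar_inv p_infty) by reflexivity.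
    apply is_lim_seq_inv. apply is_lim_seq_INR. discriminate.
Qed.

Lemma ja_ex l y : ex_pseries (ja l) y.
Proof. apply CV_radius_inside. rewrite ja_radius. exact I. Qed.

Lemma PS_derive_ja l k : PS_derive (ja l) k = - / 2 * ja (S l) k.
Proof.
  unfold PS_derive, ja. rewrite Nat.add_succ_r. simpl (S l + k)%nat.
  rewrite fact_simpl, mult_INR.
  assert (INR (fact k) <> 0) by apply INR_fact_neq_0.
  assert (INR (odfact (S (l + k))) <> 0) by apply odfact_neq.
  assert (INR (S k) <> 0) by (apply not_0_INR; lia).
  assert (2 ^ k <> 0) by (apply pow_nonzero; lra).
  simpl pow. field. repeat split; auto.
Qed.

Lemma J_deriv l y : is_derive (J l) y (- / 2 * J (S l) y).
Proof.
  unfold J. eapply dR_eq. 2: apply is_derive_PSeries; rewrite ja_radius; exact I.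
  rewrite (PSeries_ext _ (PS_scal (- / 2) (ja (S l)))).
  apply PSeries_scal. intros n. unfold PS_scal. rewrite PS_derive_ja. reflexivity.
Qed.

Lemma ja_rec l k : ja l k = (2 * INR l + 3) * ja (S l) k - PS_incr_1 (ja (S (S l))) k.
Proof.
  destruct k as [|k].
  - unfold ja. simpl PS_incr_1. rewrite !Nat.add_0_r. rewrite odfact_S.
    assert (INR (odfact l) <> 0) by apply odfact_neq.
    assert (2 * INR l + 3 <> 0) by (pose proof (pos_INR l); lra).
    unfold zero; simpl. field. auto.
  - simpl PS_incr_1. unfold ja.
    replace (S (S l) + k)%nat with (S (S (l + k))) by lia.
    replace (S l + S k)%nat with (S (S (l + k))) by lia.
    replace (l + S k)%nat with (S (l + k)) by lia.
    rewrite !odfact_S. rewrite fact_simpl, mult_INR.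
    assert (INR (fact k) <> 0) by apply INR_fact_neq_0.
    assert (INR (odfact (l + k)) <> 0) by apply odfact_neq.
    assert (INR (S k) <> 0) by (apply not_0_INR; lia).
    assert (2 * INR (l + k) + 3 <> 0) by (pose proof (pos_INR (l + k)); lra).
    assert (2 * INR (S (l + k)) + 3 <> 0) by (pose proof (pos_INR (S (l + k))); lra).
    assert (2 ^ k <> 0) by (apply pow_nonzero; lra).
    rewrite !S_INR in *. rewrite plus_INR in *.
    simpl pow. field. repeat split; auto.
Qed.

Lemma J_rec l y : J l y = (2 * INR l + 3) * J (S l) y - y * J (S (S l)) y.
Proof.
  unfold J. rewrite <- PSeries_incr_1. rewrite <- PSeries_scal.
  rewrite <- PSeries_minus.
  - apply PSeries_ext. intros n. unfold PS_minus, PS_scal. rewrite ja_rec. reflexivity.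
  - apply ex_pseries_scal. apply Rmult_comm. apply ja_ex.
  - apply ex_pseries_incr_1, ja_ex.
Qed.

Lemma even_2k k : Nat.even (2 * k) = true.
Proof. rewrite Nat.even_mul. reflexivity. Qed.
Lemma even_2k1 k : Nat.even (2 * k + 1) = false.
Proof. rewrite Nat.even_add, even_2k. reflexivity. Qed.

Lemma jt_J l s : jt l s = J l (s ^ 2).
Proof.
  unfold jt. rewrite PSeries_odd_even.
  - rewrite (PSeries_ext (fun n => jt_coef l (2 * n + 1)) (fun _ => 0)).
    rewrite PSeries_const_0. rewrite Rmult_0_r, Rplus_0_r. unfold J. apply PSeries_ext.
    intros n. unfold jt_coef. rewrite even_2k. rewrite (Nat.mul_comm 2 n), Nat.div_mul by lia. reflexivity.
    intros n. unfold jt_coef. rewrite even_2k1. reflexivity.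
  - eapply ex_pseries_ext; [|apply (ja_ex l)]. intros n. unfold jt_coef. rewrite even_2k.
    rewrite (Nat.mul_comm 2 n), Nat.div_mul by lia. reflexivity.
  - apply (ex_pseries_ext (PS_scal 0 (ja l))). intros n. unfold PS_scal, jt_coef. rewrite even_2k1.
    unfold scal; simpl; unfold mult; simpl. ring.
    apply ex_pseries_scal. apply Rmult_comm. apply ja_ex.
Qed.

Definition Rk (l k : nat) (x : R3) : R := nrm x ^ (l - k) * dlegendre l k (c3 x / nrm x).

Definition Kp (l a : nat) : R := Ynorm l a * (-1) ^ a.

Lemma solidY_eq l m x :
  solidY l m x =
  if (0 <=? m)%Z then (RtoC (Kp l (Z.abs_nat m) * Rk l (Z.abs_nat m) x) * cpow (zeta x) (Z.abs_nat m))%C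
  else (RtoC (Ynorm l (Z.abs_nat m) * Rk l (Z.abs_nat m) x) * cpow (zetab x) (Z.abs_nat m))%C.
Proof.
  unfold solidY, Kp, Rk. destruct (0 <=? m)%Z; f_equal; f_equal; ring.
Qed.

Lemma cpow_scal (s : R) z n : cpow (RtoC s * z)%C n = (RtoC (s ^ n) * cpow z n)%C.
Proof.
  induction n; simpl.
  - apply injective_projections; simpl; ring.
  - rewrite IHn. rewrite RtoC_mult. ring.
Qed.

Lemma cpow_mul z w n : cpow (z * w)%C n = (cpow z n * cpow w n)%C.
Proof. induction n; simpl. apply injective_projections; simpl; ring. rewrite IHn. ring. Qed.

Lemma pow_split r l a : r <> 0 -> (a <= l)%nat -> r ^ l * (/ r) ^ a = r ^ (l - a).
Proof.
  intros Hr Ha. replace l with ((l - a) + a)%nat at 1 by lia. rewrite pow_add.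
  rewrite Rmult_assoc, <- Rpow_mult_distr, Rinv_r, pow1 by auto. ring.
Qed.

Lemma Ylm_scaled l m x : x <> origin -> (Z.abs_nat m <= l)%nat ->
  (RtoC (nrm x ^ l) * Ylm l m (rscale (/ nrm x) x))%C = solidY l m x.
Proof.
  intros Hx Ha. pose proof (nrm_pos x Hx) as Hr.
  set (a := Z.abs_nat m) in *. set (r := nrm x) in *.
  unfold Ylm, solidY. fold a. fold r. simpl c1; simpl c2; simpl c3.
  assert (E1 : ((/ r * c1 x)%R, (/ r * c2 x)%R) = (RtoC (/ r) * (c1 x, c2 x))%C)
    by (apply injective_projections; simpl; ring).
  assert (E2 : ((/ r * c1 x)%R, (- (/ r * c2 x))%R) = (RtoC (/ r) * (c1 x, (- c2 x)%R))%C)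
    by (apply injective_projections; simpl; ring).
  rewrite E1, E2, !cpow_scal.
  assert (E3 : / r * c3 x = c3 x / r) by (unfold Rdiv; ring). rewrite E3.
  assert (E4 : r ^ l * (/ r) ^ a = r ^ (l - a)) by (apply pow_split; auto; lra).
  destruct (0 <=? m)%Z.
  - transitivity (RtoC (r ^ l * (/ r) ^ a * (Ynorm l a * (-1) ^ a * dlegendre l a (c3 x / r))) * cpow (c1 x, c2 x) a)%C.
    { rewrite !RtoC_mult. ring. }
    rewrite E4. f_equal. f_equal. ring.
  - transitivity (RtoC (r ^ l * (/ r) ^ a * (Ynorm l a * dlegendre l a (c3 x / r))) * cpow (c1 x, (- c2 x)%R) a)%C.
    { rewrite !RtoC_mult. ring. }
    rewrite E4. f_equal. f_equal. ring.
Qed.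

Lemma valid_le l m : (Z.abs m <= Z.of_nat l)%Z -> (Z.abs_nat m <= l)%nat.
Proof. intros H. lia. Qed.

Lemma nrm_origin_iff x : nrm x = 0 -> x = origin.
Proof.
  intros H. apply nsq_eq0. rewrite <- nrm_sq, H. simpl; ring.
Qed.

Lemma nrm_origin : nrm origin = 0.
Proof. unfold nrm, origin. simpl c1; simpl c2; simpl c3. replace (0 ^ 2 + 0 ^ 2 + 0 ^ 2) with 0 by ring. apply sqrt_0. Qed.

Lemma Psi_global l m n u v : valid_lmn l m n ->
  Psi l m n u v = (solidY l m u * solidY l n v * RtoC (J l (nsq u * nsq v)))%C.
Proof.
  intros [Hm Hn]. unfold Psi.
  destruct (Req_EM_T (nrm u * nrm v) 0) as [E|E].
  - rewrite jt_J. replace ((nrm u * nrm v) ^ 2) with (nsq u * nsq v).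
    ring. rewrite Rpow_mult_distr, !nrm_sq. ring.
  - assert (Hu : u <> origin) by (intros ->; apply E; rewrite nrm_origin; ring).
    assert (Hv : v <> origin) by (intros ->; apply E; rewrite nrm_origin; ring).
    rewrite <- (Ylm_scaled l m u Hu (valid_le _ _ Hm)), <- (Ylm_scaled l n v Hv (valid_le _ _ Hn)).
    unfold sph_j. rewrite jt_J. replace ((nrm u * nrm v) ^ 2) with (nsq u * nsq v) by (rewrite Rpow_mult_distr, !nrm_sq; ring). rewrite Rpow_mult_distr. rewrite !RtoC_mult. ring.
Qed.

Lemma Psi_swap l m n u v : valid_lmn l m n -> Psi l m n v u = Psi l n m u v.
Proof.
  intros H. rewrite !Psi_global; [| destruct H; split; auto | auto].
  rewrite Rmult_comm. ring.
Qed.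

Definition dlt (j : nat) : R := if Nat.eqb j 3 then 1 else 0.

Lemma hasPDr_nrm j x : (1 <= j <= 3)%nat -> x <> origin -> hasPDr j nrm x (coord j x / nrm x).
Proof.
  intros Hj Hx. unfold hasPDr, nrm.
  pose proof (nsq_pos x Hx) as Hp.
  assert (H : is_derive (fun t => nsq (upd x j t)) (coord j x) (2 * coord j x)) by (apply hasPDr_nsq; auto).
  assert (Hp' : 0 < nsq (upd x j (coord j x))) by (rewrite upd_coord; auto).
  pose proof (dR_sqrt _ _ _ H Hp') as K. cbv beta in K. rewrite upd_coord in K.
  eapply dR_eq; [|exact K]. unfold nrm. fold (nsq x). field. apply Rgt_not_eq, sqrt_lt_R0; auto.
Qed.

Lemma hasPDr_c3 j x : (1 <= j <= 3)%nat -> hasPDr j c3 x (dlt j).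
Proof.
  intros Hj. pose proof (hasPDr_coord j 3 x Hj) as H. unfold dlt.
  destruct (Nat.eqb_spec j 3), (Nat.eqb_spec 3 j); try lia; exact H.
Qed.

Definition tq (x : R3) : R := c3 x / nrm x.

Lemma hasPDr_tq j x : (1 <= j <= 3)%nat -> x <> origin ->
  hasPDr j tq x (dlt j / nrm x - c3 x * coord j x / nrm x ^ 3).
Proof.
  intros Hj Hx. pose proof (nrm_pos x Hx) as Hr.
  assert (H1 := hasPDr_c3 j x Hj).
  assert (H2 : hasPDr j (fun y => / nrm y) x (- (coord j x / nrm x) / nrm x ^ 2)).
  { unfold hasPDr. pose proof (hasPDr_nrm j x Hj Hx) as K. unfold hasPDr in K.
    assert (Hn : (fun t => nrm (upd x j t)) (coord j x) <> 0) by (simpl; rewrite upd_coord; lra).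
    pose proof (dR_inv _ _ _ K Hn) as K2. simpl in K2. rewrite upd_coord in K2. exact K2. }
  pose proof (hasPDr_mult _ _ _ _ _ _ H1 H2) as K. unfold tq.
  assert (K' : hasPDr j tq x (dlt j * / nrm x + c3 x * (- (coord j x / nrm x) / nrm x ^ 2))).
  { eapply hasPDr_ext; [|exact K]. intros; unfold tq, Rdiv; reflexivity. }
  eapply hasPDr_eq; [|exact K']. field. lra.
Qed.

Definition dRk (l k j : nat) (x : R3) : R :=
  INR (l - k) * nrm x ^ pred (l - k) * (coord j x / nrm x) * dlegendre l k (tq x)
  + nrm x ^ (l - k) * (dlegendre l (S k) (tq x) * (dlt j / nrm x - c3 x * coord j x / nrm x ^ 3)).

Lemma hasPDr_Rk l k j x : (1 <= j <= 3)%nat -> x <> origin -> hasPDr j (Rk l k) x (dRk l k j x).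
Proof.
  intros Hj Hx.
  assert (H1 : hasPDr j (fun y => nrm y ^ (l - k)) x (INR (l - k) * nrm x ^ pred (l - k) * (coord j x / nrm x))).
  { unfold hasPDr. pose proof (hasPDr_nrm j x Hj Hx) as K. unfold hasPDr in K.
    pose proof (dR_pow _ _ _ (l - k) K) as K2. simpl in K2. rewrite upd_coord in K2. exact K2. }
  assert (H2 : hasPDr j (fun y => dlegendre l k (tq y)) x
                 (dlegendre l (S k) (tq x) * (dlt j / nrm x - c3 x * coord j x / nrm x ^ 3))).
  { apply hasPDr_comp. apply hasPDr_tq; auto. apply dlegendre_deriv. }
  pose proof (hasPDr_mult _ _ _ _ _ _ H1 H2) as K. unfold Rk.
  eapply hasPDr_ext; [|exact K]. intros; reflexivity.
Qed.

Lemma Drot_Rk l k i j x : x <> origin ->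
  coord i x * dRk l k j x - coord j x * dRk l k i x =
  Rk l (S k) x * (coord i x * dlt j - coord j x * dlt i).
Proof.
  intros Hx. pose proof (nrm_pos x Hx) as Hr. unfold dRk, Rk. fold (tq x).
  destruct (Nat.lt_ge_cases k l) as [Hk|Hk].
  - replace (l - k)%nat with (S (l - S k)) by lia. simpl pred. simpl pow.
    field. lra.
  - rewrite (dlegendre_high l (S k)) by lia. replace (l - k)%nat with 0%nat by lia. simpl. ring.
Qed.

Lemma Rk_lower l b x : x <> origin -> (S b <= l)%nat ->
  2 * INR (S b) * c3 x * Rk l (S b) x - (c1 x ^ 2 + c2 x ^ 2) * Rk l (S (S b)) x
  = (INR l + INR (S b)) * (INR l - INR b) * Rk l b x.
Proof.
  intros Hx Hb. pose proof (nrm_pos x Hx) as Hr.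
  pose proof (nrm_sq x) as Hs. unfold nsq in Hs.
  pose proof (legendre_ode l b (tq x)) as O.
  assert (Ex : c3 x = tq x * nrm x) by (unfold tq; field; lra).
  unfold Rk. fold (tq x).
  set (t := tq x) in *. set (r := nrm x) in *.
  set (Q0 := dlegendre l b t) in *. set (Q1 := dlegendre l (S b) t) in *. set (Q2 := dlegendre l (S (S b)) t) in *.
  assert (E12 : c1 x ^ 2 + c2 x ^ 2 = r ^ 2 - c3 x ^ 2) by lra.
  rewrite E12, Ex.
  destruct (Nat.eq_dec (S b) l) as [E|E].
  - subst l. replace (S b - S (S b))%nat with 0%nat by lia. replace (S b - S b)%nat with 0%nat by lia.
    replace (S b - b)%nat with 1%nat by lia.
    assert (Q2 = 0) by (unfold Q2; apply dlegendre_top). rewrite H in *.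
    simpl pow. rewrite !S_INR in *.
    transitivity (r * (2 * (INR b + 1) * t * Q1)). ring.
    assert (O2 : 2 * (INR b + 1) * t * Q1 = - ((INR b * (INR b + 1) - (INR b + 1) * (INR b + 1 + 1)) * Q0)) by lra.
    rewrite O2. ring.
  - replace (l - b)%nat with (S (S (l - S (S b)))) by lia.
    replace (l - S b)%nat with (S (l - S (S b))) by lia.
    set (e := (l - S (S b))%nat). simpl pow.
    assert (O' : (t ^ 2 - 1) * Q2 + 2 * INR (S b) * t * Q1 = - (INR b * INR (S b) - INR l * INR (S l)) * Q0) by lra.
    rewrite !S_INR in *.
    transitivity (r ^ e * r * r * ((t ^ 2 - 1) * Q2 + 2 * (INR b + 1) * t * Q1)). simpl; ring.
    rewrite O'. ring.
Qed.

Definition DopC (i j : nat) (g : R3 -> C) (x : R3) : C :=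
  (RtoC (coord i x) * pdC j g x - RtoC (coord j x) * pdC i g x)%C.

Lemma opA_DopC i j f u v : opA i j f u v = (- Ci * DopC i j (fun w => f w v) u)%C.
Proof. reflexivity. Qed.

Definition dzeta (j : nat) : C := match j with 1 => 1%C | 2 => Ci | _ => 0%C end.
Definition dzetab (j : nat) : C := match j with 1 => 1%C | 2 => (- Ci)%C | _ => 0%C end.

Lemma hasPD_zeta j x : (1 <= j <= 3)%nat -> hasPD j zeta x (dzeta j).
Proof.
  intros Hj. destruct j as [|[|[|[|]]]]; try lia.
  apply hasPD_zeta1. apply hasPD_zeta2. apply hasPD_zeta3.
Qed.
Lemma hasPD_zetab j x : (1 <= j <= 3)%nat -> hasPD j zetab x (dzetab j).
Proof.
  intros Hj. destruct j as [|[|[|[|]]]]; try lia.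
  apply hasPD_zetab1. apply hasPD_zetab2. apply hasPD_zetab3.
Qed.

Lemma hasPD_RB l a (Z : R3 -> C) (dZ : nat -> C) j x :
  (1 <= j <= 3)%nat -> x <> origin -> hasPD j Z x (dZ j) ->
  hasPD j (fun y => RtoC (Rk l a y) * cpow (Z y) a)%C x
    (RtoC (dRk l a j x) * cpow (Z x) a + RtoC (Rk l a x) * (RtoC (INR a) * cpow (Z x) (pred a) * dZ j))%C.
Proof.
  intros Hj Hx HZ. apply hasPD_mult; auto.
  apply hasPD_RtoC, hasPDr_Rk; auto. apply hasPD_cpow; auto.
Qed.

Lemma DopC_RB l a (Z : R3 -> C) (dZ : nat -> C) i j x :
  (1 <= i <= 3)%nat -> (1 <= j <= 3)%nat -> x <> origin ->
  hasPD i Z x (dZ i) -> hasPD j Z x (dZ j) ->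
  DopC i j (fun y => RtoC (Rk l a y) * cpow (Z y) a)%C x =
  (RtoC (Rk l (S a) x * (coord i x * dlt j - coord j x * dlt i)) * cpow (Z x) a
   + RtoC (Rk l a x) * RtoC (INR a) * cpow (Z x) (pred a) * (RtoC (coord i x) * dZ j - RtoC (coord j x) * dZ i))%C.
Proof.
  intros Hi Hj Hx HZi HZj. unfold DopC.
  rewrite (pdC_val _ _ _ _ (hasPD_RB l a Z dZ j x Hj Hx HZj)).
  rewrite (pdC_val _ _ _ _ (hasPD_RB l a Z dZ i x Hi Hx HZi)).
  rewrite <- (Drot_Rk l a i j x Hx).
  rewrite RtoC_minus, !RtoC_mult. ring.
Qed.

Definition Zf (m : Z) (x : R3) : C := if (0 <=? m)%Z then zeta x else zetab x.
Definition Bf (l : nat) (m : Z) (x : R3) : C :=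
  (RtoC (Rk l (Z.abs_nat m) x) * cpow (Zf m x) (Z.abs_nat m))%C.

Lemma C_comp (a b : C) : fst a = fst b -> snd a = snd b -> a = b.
Proof. intros; apply injective_projections; auto. Qed.

Lemma DopC_Bf l m i j x : (1 <= i <= 3)%nat -> (1 <= j <= 3)%nat -> x <> origin ->
  DopC i j (Bf l m) x =
  (RtoC (Rk l (S (Z.abs_nat m)) x * (coord i x * dlt j - coord j x * dlt i)) * cpow (Zf m x) (Z.abs_nat m)
   + RtoC (Rk l (Z.abs_nat m) x) * RtoC (INR (Z.abs_nat m)) * cpow (Zf m x) (pred (Z.abs_nat m)) *
     (RtoC (coord i x) * (if (0 <=? m)%Z then dzeta j else dzetab j)
      - RtoC (coord j x) * (if (0 <=? m)%Z then dzeta i else dzetab i)))%C.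
Proof.
  intros Hi Hj Hx. unfold Bf, Zf. destruct (0 <=? m)%Z.
  - apply DopC_RB; auto; apply hasPD_zeta; auto.
  - apply DopC_RB; auto; apply hasPD_zetab; auto.
Qed.

Lemma D12_Bf l m x : x <> origin -> DopC 1 2 (Bf l m) x = (Ci * RtoC (IZR m) * Bf l m x)%C.
Proof.
  intros Hx. rewrite DopC_Bf by (auto; lia). unfold Bf, Zf, dlt. simpl Nat.eqb. cbv iota.
  destruct (Z.leb_spec 0 m) as [Hm|Hm].
  - replace (IZR m) with (INR (Z.abs_nat m)) by (rewrite INR_IZR_INZ; f_equal; lia).
    destruct (Z.abs_nat m) as [|b].
    + apply C_comp; simpl; ring.
    + simpl pred. rewrite cpow_S. destruct (cpow (zeta x) b) as [p q]. unfold zeta.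
      apply C_comp; simpl; ring.
  - replace (IZR m) with (- INR (Z.abs_nat m)) by (rewrite INR_IZR_INZ; rewrite <- opp_IZR; f_equal; lia).
    destruct (Z.abs_nat m) as [|b].
    + apply C_comp; simpl; ring.
    + simpl pred. rewrite cpow_S. destruct (cpow (zetab x) b) as [p q]. unfold zetab.
      apply C_comp; simpl; ring.
Qed.

Definition betap (l : nat) (m : Z) : R :=
  if (0 <=? m)%Z then -1 else (INR l + INR (Z.abs_nat m)) * (INR l - INR (Z.abs_nat m) + 1).
Definition betam (l : nat) (m : Z) : R :=
  if (0 <? m)%Z then (INR l + INR (Z.abs_nat m)) * (INR l - INR (Z.abs_nat m) + 1) else -1.

Lemma Lp_Bf l m x : x <> origin -> (Z.abs_nat m <= l)%nat ->
  (DopC 3 1 (Bf l m) x + Ci * DopC 3 2 (Bf l m) x)%C = (RtoC (betap l m) * Bf l (m + 1) x)%C.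
Proof.
  intros Hx Hl. rewrite !DopC_Bf by (auto; lia). unfold betap, Bf, Zf, dlt. simpl Nat.eqb. cbv iota.
  destruct (Z.leb_spec 0 m) as [Hm|Hm].
  - replace (0 <=? m + 1)%Z with true by (symmetry; apply Z.leb_le; lia).
    replace (Z.abs_nat (m + 1)) with (S (Z.abs_nat m)) by lia.
    set (a := Z.abs_nat m). rewrite cpow_S. simpl dzeta.
    destruct (cpow (zeta x) a) as [p q]. destruct (cpow (zeta x) (pred a)) as [p' q']. unfold zeta.
    apply C_comp; simpl; ring.
  - assert (Ha : (1 <= Z.abs_nat m)%nat) by lia.
    assert (E : cpow (if (0 <=? m + 1)%Z then zeta x else zetab x) (Z.abs_nat (m + 1)) = cpow (zetab x) (Z.abs_nat (m+1))).
    { destruct (Z.leb_spec 0 (m + 1)). replace (Z.abs_nat (m + 1)) with 0%nat by lia. reflexivity. reflexivity. }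
    rewrite E. replace (Z.abs_nat m) with (S (Z.abs_nat (m + 1))) in * by lia.
    set (b := Z.abs_nat (m + 1)) in *. simpl pred.
    pose proof (Rk_lower l b x Hx Hl) as K.
    replace (INR l - INR (S b) + 1) with (INR l - INR b) by (rewrite S_INR; ring).
    transitivity (RtoC ((INR l + INR (S b)) * (INR l - INR b) * Rk l b x) * cpow (zetab x) b)%C.
    2:{ rewrite !RtoC_mult. ring. }
    rewrite <- K. rewrite cpow_S. simpl dzetab.
    destruct (cpow (zetab x) b) as [p q]. unfold zetab.
    apply C_comp; simpl; ring.
Qed.

Lemma Lm_Bf l m x : x <> origin -> (Z.abs_nat m <= l)%nat ->
  (DopC 3 1 (Bf l m) x - Ci * DopC 3 2 (Bf l m) x)%C = (RtoC (betam l m) * Bf l (m - 1) x)%C.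
Proof.
  intros Hx Hl. rewrite !DopC_Bf by (auto; lia). unfold betam, Bf, Zf, dlt. simpl Nat.eqb. cbv iota.
  destruct (Z.ltb_spec 0 m) as [Hm|Hm].
  - replace (0 <=? m)%Z with true by (symmetry; apply Z.leb_le; lia).
    replace (0 <=? m - 1)%Z with true by (symmetry; apply Z.leb_le; lia).
    replace (Z.abs_nat m) with (S (Z.abs_nat (m - 1))) in * by lia.
    set (b := Z.abs_nat (m - 1)) in *. simpl pred.
    pose proof (Rk_lower l b x Hx Hl) as K.
    replace (INR l - INR (S b) + 1) with (INR l - INR b) by (rewrite S_INR; ring).
    transitivity (RtoC ((INR l + INR (S b)) * (INR l - INR b) * Rk l b x) * cpow (zeta x) b)%C.
    2:{ rewrite !RtoC_mult. ring. }
    rewrite <- K. rewrite cpow_S. simpl dzeta.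
    destruct (cpow (zeta x) b) as [p q]. unfold zeta.
    apply C_comp; simpl; ring.
  - replace (0 <=? m - 1)%Z with false by (symmetry; apply Z.leb_gt; lia).
    replace (Z.abs_nat (m - 1)) with (S (Z.abs_nat m)) by lia.
    destruct (Z.eq_dec m 0) as [E0|E0].
    + subst m. simpl Z.abs_nat. simpl (0 <=? 0)%Z. cbv iota. simpl pred. simpl dzeta.
      simpl cpow. unfold zeta, zetab. apply C_comp; simpl; ring.
    + replace (0 <=? m)%Z with false by (symmetry; apply Z.leb_gt; lia).
      set (a := Z.abs_nat m). rewrite cpow_S. simpl dzetab.
      destruct (cpow (zetab x) a) as [p q]. destruct (cpow (zetab x) (pred a)) as [p' q']. unfold zetab.
      apply C_comp; simpl; ring.
Qed.

Lemma DopC_ext i j g h x : (forall y, g y = h y) -> DopC i j g x = DopC i j h x.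
Proof. intros E. replace h with g by (apply functional_extensionality; auto). reflexivity. Qed.

Lemma DopC_scal i j (c : C) g x gi gj : hasPD i g x gi -> hasPD j g x gj ->
  DopC i j (fun y => c * g y)%C x = (c * DopC i j g x)%C.
Proof.
  intros Hi Hj. unfold DopC.
  rewrite (pdC_val _ _ _ _ (hasPD_scal _ c _ _ _ Hi)), (pdC_val _ _ _ _ (hasPD_scal _ c _ _ _ Hj)).
  rewrite (pdC_val _ _ _ _ Hi), (pdC_val _ _ _ _ Hj). ring.
Qed.

Lemma DopC_origin i j g : DopC i j g origin = 0%C.
Proof.
  unfold DopC. assert (forall k, coord k origin = 0) by (intros [|[|[|[|]]]]; reflexivity).
  rewrite !H. ring.
Qed.

Lemma hasPDr_radial j (G : R -> R) (dG : R -> R) s u :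
  (1 <= j <= 3)%nat -> (forall y, is_derive G y (dG y)) ->
  hasPDr j (fun w => G (nsq w * s)%R) u (dG (nsq u * s) * (2 * coord j u * s)).
Proof.
  intros Hj HG. apply hasPDr_comp; auto.
  eapply hasPDr_eq; [|apply hasPDr_mult; [apply hasPDr_nsq; auto|apply hasPDr_const]]. cbv beta. ring.
Qed.

Lemma hasPD_prod j (P : R3 -> C) (c : C) (G dG : R -> R) (s : R) u p :
  (1 <= j <= 3)%nat -> (forall y, is_derive G y (dG y)) -> hasPD j P u p ->
  hasPD j (fun w => P w * c * RtoC (G (nsq w * s)%R))%C u
    (p * c * RtoC (G (nsq u * s)%R) + P u * c * RtoC (dG (nsq u * s) * (2 * coord j u * s))%R)%C.
Proof.
  intros Hj HG HP. eapply hasPD_eq; [|apply hasPD_mult; [auto|apply hasPD_mult; [auto|exact HP|apply hasPD_const]|]].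
  2: apply hasPD_RtoC, hasPDr_radial; auto.
  cbv beta. ring.
Qed.

Lemma DopC_prod i j (P : R3 -> C) (c : C) (G dG : R -> R) (s : R) u pi pj :
  (1 <= i <= 3)%nat -> (1 <= j <= 3)%nat -> (forall y, is_derive G y (dG y)) ->
  hasPD i P u pi -> hasPD j P u pj ->
  DopC i j (fun w => P w * c * RtoC (G (nsq w * s)%R))%C u = (DopC i j P u * c * RtoC (G (nsq u * s)%R))%C.
Proof.
  intros Hi Hj HG HPi HPj. unfold DopC.
  rewrite (pdC_val _ _ _ _ (hasPD_prod i P c G dG s u pi Hi HG HPi)).
  rewrite (pdC_val _ _ _ _ (hasPD_prod j P c G dG s u pj Hj HG HPj)).
  rewrite (pdC_val _ _ _ _ HPi), (pdC_val _ _ _ _ HPj).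
  rewrite !RtoC_mult. ring.
Qed.

Definition dZf (m : Z) (j : nat) : C := if (0 <=? m)%Z then dzeta j else dzetab j.

Lemma hasPD_Bf l m j x : (1 <= j <= 3)%nat -> x <> origin ->
  hasPD j (Bf l m) x
    (RtoC (dRk l (Z.abs_nat m) j x) * cpow (Zf m x) (Z.abs_nat m)
     + RtoC (Rk l (Z.abs_nat m) x) * (RtoC (INR (Z.abs_nat m)) * cpow (Zf m x) (pred (Z.abs_nat m)) * dZf m j))%C.
Proof.
  intros Hj Hx. unfold Bf, Zf, dZf. destruct (0 <=? m)%Z.
  - apply hasPD_RB; auto. apply hasPD_zeta; auto.
  - apply hasPD_RB; auto. apply hasPD_zetab; auto.
Qed.

Lemma hasPD_Bf_ex l m j x : (1 <= j <= 3)%nat -> x <> origin -> exists z, hasPD j (Bf l m) x z.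
Proof. intros; eexists; apply hasPD_Bf; auto. Qed.

Definition cf (l : nat) (m : Z) : R := if (0 <=? m)%Z then Kp l (Z.abs_nat m) else Ynorm l (Z.abs_nat m).

Lemma solidY_Bf l m x : solidY l m x = (RtoC (cf l m) * Bf l m x)%C.
Proof.
  rewrite solidY_eq. unfold cf, Bf, Zf. destruct (0 <=? m)%Z; rewrite RtoC_mult; ring.
Qed.

Lemma Ynorm_pos l a : (a <= l)%nat -> 0 < Ynorm l a.
Proof.
  intros H. unfold Ynorm. apply sqrt_lt_R0.
  pose proof PI_RGT_0. pose proof (pos_INR l).
  pose proof (INR_fact_lt_0 (l - a)). pose proof (INR_fact_lt_0 (l + a)).
  unfold Rdiv. repeat apply Rmult_lt_0_compat; try lra; apply Rinv_0_lt_compat; lra.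
Qed.

Lemma cf_neq l m : (Z.abs_nat m <= l)%nat -> cf l m <> 0.
Proof.
  intros H. unfold cf, Kp. pose proof (Ynorm_pos l _ H).
  destruct (0 <=? m)%Z.
  - apply Rmult_integral_contrapositive_currified. lra. apply pow_nonzero; lra.
  - lra.
Qed.

Lemma Psi_B l m n u v : valid_lmn l m n ->
  Psi l m n u v = (RtoC (cf l m) * Bf l m u * (RtoC (cf l n) * Bf l n v) * RtoC (J l (nsq u * nsq v)))%C.
Proof. intros H. rewrite Psi_global by auto. rewrite !solidY_Bf. reflexivity. Qed.

Lemma solidY_origin l m : (1 <= l)%nat -> (Z.abs_nat m <= l)%nat -> solidY l m origin = 0%C.
Proof.
  intros Hl Hm. rewrite solidY_eq. unfold Rk. rewrite nrm_origin.
  destruct (Nat.eq_dec (Z.abs_nat m) l) as [E|E].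
  - rewrite E. destruct l; [lia|]. unfold zeta, zetab, origin; simpl.
    destruct (0 <=? m)%Z; apply C_comp; simpl; ring.
  - replace (l - Z.abs_nat m)%nat with (S (l - Z.abs_nat m - 1)) by lia. simpl pow.
    destruct (0 <=? m)%Z; apply C_comp; simpl; ring.
Qed.

Lemma Psi_origin l m n v : valid_lmn l m n -> (1 <= l)%nat -> Psi l m n origin v = 0%C.
Proof.
  intros H Hl. rewrite Psi_global by auto. rewrite solidY_origin; auto. ring.
  destruct H; lia.
Qed.

Lemma hasPD_cBf l m k x : (1 <= k <= 3)%nat -> x <> origin ->
  exists z, hasPD k (fun w => RtoC (cf l m) * Bf l m w)%C x z.
Proof. intros Hk Hx. destruct (hasPD_Bf_ex l m k x Hk Hx) as [z Hz]. eexists. apply hasPD_scal, Hz. Qed.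

Lemma J_deriv' l : forall y, is_derive (J l) y ((fun y => - / 2 * J (S l) y) y).
Proof. intros; apply J_deriv. Qed.

Lemma DopC_Psi i j l m n u v : valid_lmn l m n -> u <> origin ->
  (1 <= i <= 3)%nat -> (1 <= j <= 3)%nat ->
  DopC i j (fun w => Psi l m n w v) u =
  (RtoC (cf l m) * DopC i j (Bf l m) u * (RtoC (cf l n) * Bf l n v) * RtoC (J l (nsq u * nsq v)))%C.
Proof.
  intros H Hu Hi Hj.
  rewrite (DopC_ext _ _ _ (fun w => (RtoC (cf l m) * Bf l m w) * (RtoC (cf l n) * Bf l n v) * RtoC (J l (nsq w * nsq v)%R))%C)
    by (intros; apply Psi_B; auto).
  destruct (hasPD_cBf l m i u Hi Hu) as [zi Hzi]. destruct (hasPD_cBf l m j u Hj Hu) as [zj Hzj].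
  rewrite (DopC_prod i j _ _ (J l) _ (nsq v) u zi zj Hi Hj (J_deriv' l) Hzi Hzj).
  destruct (hasPD_Bf_ex l m i u Hi Hu) as [wi Hwi]. destruct (hasPD_Bf_ex l m j u Hj Hu) as [wj Hwj].
  rewrite (DopC_scal i j _ _ _ _ _ Hwi Hwj). reflexivity.
Qed.

Lemma R3_eq_dec (u w : R3) (E : w = origin) : {u = origin} + {u <> origin}.
Proof.
  destruct (Req_EM_T (nsq u) 0) as [h|h].
  - left; apply nsq_eq0, h.
  - right; intros ->; apply h; unfold nsq, origin; simpl; ring.
Qed.

Ltac csolve :=
  repeat match goal with |- context [Bf ?l ?m ?x] => let p := fresh "p" in let q := fresh "q" in
     destruct (Bf l m x) as [p q] end;
  apply C_comp; simpl; ring.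

Lemma valid_abs l m n : valid_lmn l m n -> (Z.abs_nat m <= l)%nat /\ (Z.abs_nat n <= l)%nat.
Proof. intros [H1 H2]; split; lia. Qed.

Lemma opA12_Psi l m n u v : valid_lmn l m n -> opA 1 2 (Psi l m n) u v = (RtoC (IZR m) * Psi l m n u v)%C.
Proof.
  intros H. rewrite opA_DopC.
  destruct (R3_eq_dec u origin eq_refl) as [->|Hu].
  - rewrite DopC_origin. destruct l as [|l].
    + destruct H as [H1 H2]. replace m with 0%Z by lia. simpl. ring.
    + rewrite Psi_origin by (auto; lia). ring.
  - rewrite DopC_Psi by (auto; lia). rewrite D12_Bf by auto. rewrite Psi_B by auto. csolve.
Qed.

Definition Lp (F : Fun6) : Fun6 := fun u v => (Ci * opA 3 1 F u v + (-1) * opA 3 2 F u v)%C.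
Definition Lm (F : Fun6) : Fun6 := fun u v => (Ci * opA 3 1 F u v + 1 * opA 3 2 F u v)%C.

Lemma Lp_DopC F u v : Lp F u v = (DopC 3 1 (fun w => F w v) u + Ci * DopC 3 2 (fun w => F w v) u)%C.
Proof.
  unfold Lp. rewrite !opA_DopC.
  destruct (DopC 3 1 (fun w => F w v) u), (DopC 3 2 (fun w => F w v) u). apply C_comp; simpl; ring.
Qed.
Lemma Lm_DopC F u v : Lm F u v = (DopC 3 1 (fun w => F w v) u - Ci * DopC 3 2 (fun w => F w v) u)%C.
Proof.
  unfold Lm. rewrite !opA_DopC.
  destruct (DopC 3 1 (fun w => F w v) u), (DopC 3 2 (fun w => F w v) u). apply C_comp; simpl; ring.
Qed.

Definition alp (l : nat) (m : Z) : R := cf l m * betap l m / cf l (m + 1).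
Definition alm (l : nat) (m : Z) : R := cf l m * betam l m / cf l (m - 1).

Lemma valid_succ l m n : valid_lmn l m n -> (m < Z.of_nat l)%Z -> valid_lmn l (m + 1) n.
Proof. intros [H1 H2] H; split; lia. Qed.
Lemma valid_pred l m n : valid_lmn l m n -> (- Z.of_nat l < m)%Z -> valid_lmn l (m - 1) n.
Proof. intros [H1 H2] H; split; lia. Qed.

Lemma Lp_Psi l m n u v : valid_lmn l m n -> (m < Z.of_nat l)%Z ->
  Lp (Psi l m n) u v = (RtoC (alp l m) * Psi l (m + 1) n u v)%C.
Proof.
  intros H Hm. pose proof (valid_succ l m n H Hm) as H'.
  rewrite Lp_DopC.
  destruct (R3_eq_dec u origin eq_refl) as [->|Hu].
  - rewrite !DopC_origin. rewrite Psi_origin by (auto; destruct H; lia). ring.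
  - rewrite !DopC_Psi by (auto; lia).
    assert (E : (DopC 3 1 (Bf l m) u + Ci * DopC 3 2 (Bf l m) u)%C = (RtoC (betap l m) * Bf l (m + 1) u)%C)
      by (apply Lp_Bf; auto; destruct H; lia).
    rewrite Psi_B by auto.
    assert (Ec : alp l m * cf l (m + 1) = cf l m * betap l m).
    { unfold alp. field. apply cf_neq. destruct H'; lia. }
    transitivity (RtoC (cf l m) * (DopC 3 1 (Bf l m) u + Ci * DopC 3 2 (Bf l m) u) * (RtoC (cf l n) * Bf l n v) * RtoC (J l (nsq u * nsq v)))%C.
    { ring. }
    rewrite E. transitivity (RtoC (cf l m * betap l m) * Bf l (m + 1) u * (RtoC (cf l n) * Bf l n v) * RtoC (J l (nsq u * nsq v)))%C.
    { rewrite RtoC_mult. ring. }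
    rewrite <- Ec, RtoC_mult. ring.
Qed.

Lemma Bf_top l x : Bf l (Z.of_nat l + 1) x = 0%C.
Proof.
  unfold Bf, Rk. replace (Z.abs_nat (Z.of_nat l + 1)) with (S l) by lia.
  rewrite dlegendre_top. rewrite Rmult_0_r. ring.
Qed.

Lemma Lp_Psi_top l n u v : valid_lmn l (Z.of_nat l) n -> Lp (Psi l (Z.of_nat l) n) u v = 0%C.
Proof.
  intros H. rewrite Lp_DopC.
  destruct (R3_eq_dec u origin eq_refl) as [->|Hu].
  - rewrite !DopC_origin. ring.
  - rewrite !DopC_Psi by (auto; lia).
    assert (E : (DopC 3 1 (Bf l (Z.of_nat l)) u + Ci * DopC 3 2 (Bf l (Z.of_nat l)) u)%C = (RtoC (betap l (Z.of_nat l)) * Bf l (Z.of_nat l + 1) u)%C)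
      by (apply Lp_Bf; auto; lia).
    rewrite Bf_top in E.
    transitivity (RtoC (cf l (Z.of_nat l)) * (DopC 3 1 (Bf l (Z.of_nat l)) u + Ci * DopC 3 2 (Bf l (Z.of_nat l)) u) * (RtoC (cf l n) * Bf l n v) * RtoC (J l (nsq u * nsq v)))%C.
    { ring. }
    rewrite E. ring.
Qed.

Lemma Lm_Psi l m n u v : valid_lmn l m n -> (- Z.of_nat l < m)%Z ->
  Lm (Psi l m n) u v = (RtoC (alm l m) * Psi l (m - 1) n u v)%C.
Proof.
  intros H Hm. pose proof (valid_pred l m n H Hm) as H'.
  rewrite Lm_DopC.
  destruct (R3_eq_dec u origin eq_refl) as [->|Hu].
  - rewrite !DopC_origin. rewrite Psi_origin by (auto; destruct H; lia). ring.
  - rewrite !DopC_Psi by (auto; lia).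
    assert (E : (DopC 3 1 (Bf l m) u - Ci * DopC 3 2 (Bf l m) u)%C = (RtoC (betam l m) * Bf l (m - 1) u)%C)
      by (apply Lm_Bf; auto; destruct H; lia).
    rewrite Psi_B by auto.
    assert (Ec : alm l m * cf l (m - 1) = cf l m * betam l m).
    { unfold alm. field. apply cf_neq. destruct H'; lia. }
    transitivity (RtoC (cf l m) * (DopC 3 1 (Bf l m) u - Ci * DopC 3 2 (Bf l m) u) * (RtoC (cf l n) * Bf l n v) * RtoC (J l (nsq u * nsq v)))%C.
    { ring. }
    rewrite E. transitivity (RtoC (cf l m * betam l m) * Bf l (m - 1) u * (RtoC (cf l n) * Bf l n v) * RtoC (J l (nsq u * nsq v)))%C.
    { rewrite RtoC_mult. ring. }
    rewrite <- Ec, RtoC_mult. ring.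
Qed.

Lemma betap_neq l m : (- Z.of_nat l <= m)%Z -> (m < Z.of_nat l)%Z -> betap l m <> 0.
Proof.
  intros H1 H2. unfold betap. destruct (Z.leb_spec 0 m). lra.
  pose proof (pos_INR l). pose proof (pos_INR (Z.abs_nat m)).
  assert (INR (Z.abs_nat m) <= INR l) by (apply le_INR; lia).
  apply Rmult_integral_contrapositive_currified.
  - assert (0 < INR (Z.abs_nat m)) by (apply lt_0_INR; lia). lra.
  - lra.
Qed.

Lemma betam_neq l m : (- Z.of_nat l < m)%Z -> (m <= Z.of_nat l)%Z -> betam l m <> 0.
Proof.
  intros H1 H2. unfold betam. destruct (Z.ltb_spec 0 m); [|lra].
  pose proof (pos_INR l). pose proof (pos_INR (Z.abs_nat m)).
  assert (INR (Z.abs_nat m) <= INR l) by (apply le_INR; lia).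
  apply Rmult_integral_contrapositive_currified.
  - assert (0 < INR (Z.abs_nat m)) by (apply lt_0_INR; lia). lra.
  - lra.
Qed.

Lemma alp_neq l m : (- Z.of_nat l <= m)%Z -> (m < Z.of_nat l)%Z -> alp l m <> 0.
Proof.
  intros H1 H2. unfold alp. unfold Rdiv. repeat apply Rmult_integral_contrapositive_currified.
  apply cf_neq; lia. apply betap_neq; lia. apply Rinv_neq_0_compat, cf_neq; lia.
Qed.

Lemma alm_neq l m : (- Z.of_nat l < m)%Z -> (m <= Z.of_nat l)%Z -> alm l m <> 0.
Proof.
  intros H1 H2. unfold alm. unfold Rdiv. repeat apply Rmult_integral_contrapositive_currified.
  apply cf_neq; lia. apply betam_neq; lia. apply Rinv_neq_0_compat, cf_neq; lia.
Qed.

Definition prodF (P Q : R3 -> C) (G : R -> R) : Fun6 :=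
  fun u v => (P u * Q v * RtoC (G (nsq u * nsq v)%R))%C.

Definition gradOK (P : R3 -> C) (dP : nat -> R3 -> C) : Prop :=
  forall k x, (1 <= k <= 3)%nat -> hasPD k P x (dP k x).

Lemma dV_prodF P Q dQ (G G1 : R -> R) j :
  (1 <= j <= 3)%nat -> gradOK Q dQ -> (forall y, is_derive G y (G1 y)) ->
  forall u v, dV j (prodF P Q G) u v =
    (P u * dQ j v * RtoC (G (nsq u * nsq v)%R) + P u * Q v * RtoC (G1 (nsq u * nsq v) * (2 * coord j v * nsq u))%R)%C.
Proof.
  intros Hj HQ HG u v.
  assert (K : hasPD j (fun w => Q w * P u * RtoC (G (nsq w * nsq u)%R))%C v
    (dQ j v * P u * RtoC (G (nsq v * nsq u)%R) + Q v * P u * RtoC (G1 (nsq v * nsq u) * (2 * coord j v * nsq u))%R)%C).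
  { apply (hasPD_prod j Q (P u) G G1 (nsq u) v); auto. }
  assert (K' : hasPD j (fun w => prodF P Q G u w) v
    (dQ j v * P u * RtoC (G (nsq v * nsq u)%R) + Q v * P u * RtoC (G1 (nsq v * nsq u) * (2 * coord j v * nsq u))%R)%C).
  { eapply hasPD_ext; [|exact K]. intros y. unfold prodF. rewrite (Rmult_comm (nsq u)). ring. }
  pose proof (pdC_val _ _ _ _ K') as E. unfold pdC in E. unfold dV. rewrite E.
  rewrite (Rmult_comm (nsq v)). ring.
Qed.

Lemma hasPD_mulnsq P dP k x : (1 <= k <= 3)%nat -> hasPD k P x (dP k x) ->
  hasPD k (fun w => P w * RtoC (nsq w))%C x (dP k x * RtoC (nsq x) + P x * RtoC (2 * coord k x)%R)%C.
Proof. intros Hk H. apply hasPD_mult; auto. apply hasPD_RtoC, hasPDr_nsq; auto. Qed.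

Lemma dUdV_prodF P dP Q dQ (G G1 G2 : R -> R) i j :
  (1 <= i <= 3)%nat -> (1 <= j <= 3)%nat -> gradOK P dP -> gradOK Q dQ ->
  (forall y, is_derive G y (G1 y)) -> (forall y, is_derive G1 y (G2 y)) ->
  forall u v, dU i (dV j (prodF P Q G)) u v =
   (dP i u * dQ j v * RtoC (G (nsq u * nsq v)%R)
    + P u * dQ j v * RtoC (G1 (nsq u * nsq v) * (2 * coord i u * nsq v))%R
    + (dP i u * RtoC (nsq u) + P u * RtoC (2 * coord i u)%R) * Q v * RtoC (2 * coord j v)%R * RtoC (G1 (nsq u * nsq v)%R)
    + P u * RtoC (nsq u) * Q v * RtoC (2 * coord j v) * RtoC (G2 (nsq u * nsq v) * (2 * coord i u * nsq v))%R)%C.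
Proof.
  intros Hi Hj HP HQ HG HG1 u v.
  assert (EV : forall w, dV j (prodF P Q G) w v =
     (P w * dQ j v * RtoC (G (nsq w * nsq v)%R) + (P w * RtoC (nsq w)) * (Q v * RtoC (2 * coord j v)%R) * RtoC (G1 (nsq w * nsq v)%R))%C).
  { intros w. rewrite (dV_prodF P Q dQ G G1 j Hj HQ HG w v). rewrite !RtoC_mult. ring. }
  assert (K1 := hasPD_prod i P (dQ j v) G G1 (nsq v) u (dP i u) Hi HG (HP i u Hi)).
  assert (K2 := hasPD_prod i (fun w => P w * RtoC (nsq w))%C (Q v * RtoC (2 * coord j v)%R)%C G1 G2 (nsq v) u _ Hi HG1
                  (hasPD_mulnsq P dP i u Hi (HP i u Hi))).
  assert (K := hasPD_plus _ _ _ _ _ _ K1 K2).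
  assert (K' : hasPD i (fun w => dV j (prodF P Q G) w v) u
     (dP i u * dQ j v * RtoC (G (nsq u * nsq v)%R) + P u * dQ j v * RtoC (G1 (nsq u * nsq v) * (2 * coord i u * nsq v))%R +
      ((dP i u * RtoC (nsq u) + P u * RtoC (2 * coord i u)%R) * (Q v * RtoC (2 * coord j v)%R) * RtoC (G1 (nsq u * nsq v)%R) +
       P u * RtoC (nsq u) * (Q v * RtoC (2 * coord j v)%R) * RtoC (G2 (nsq u * nsq v) * (2 * coord i u * nsq v))%R))%C).
  { eapply hasPD_ext; [|exact K]. intros w. rewrite EV. reflexivity. }
  pose proof (pdC_val _ _ _ _ K') as E. unfold pdC in E. unfold dU. rewrite E. ring.
Qed.

Definition zp (L : nat) (x : R3) : C := cpow (zeta x) L.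
Definition dzp (L : nat) (k : nat) (x : R3) : C := (RtoC (INR L) * cpow (zeta x) (pred L) * dzeta k)%C.

Lemma grad_zp L : gradOK (zp L) (dzp L).
Proof. intros k x Hk. unfold zp, dzp. apply hasPD_cpow; auto. apply hasPD_zeta; auto. Qed.

Definition H (L : nat) : Fun6 := prodF (zp L) (zp L) (J L).

Definition J1 (L : nat) (y : R) : R := - / 2 * J (S L) y.
Definition J2 (L : nat) (y : R) : R := / 4 * J (S (S L)) y.

Lemma J_d0 L : forall y, is_derive (J L) y (J1 L y).
Proof. intros; apply J_deriv. Qed.
Lemma J_d1 L : forall y, is_derive (J1 L) y (J2 L y).
Proof.
  intros y. unfold J1, J2. eapply dR_eq; [|apply is_derive_scal, J_deriv]. field.
Qed.

Definition Cpp (F : Fun6) : Fun6 := fun u v =>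
  ((opC 1 1 F u v + Ci * opC 1 2 F u v) + (Ci * opC 2 1 F u v + (-1) * opC 2 2 F u v))%C.
Definition Cmm (F : Fun6) : Fun6 := fun u v =>
  ((opC 1 1 F u v + (- Ci) * opC 1 2 F u v) + ((- Ci) * opC 2 1 F u v + (-1) * opC 2 2 F u v))%C.

Lemma opC_prodF P dP Q dQ i j G G1 G2 u v :
  (1 <= i <= 3)%nat -> (1 <= j <= 3)%nat -> gradOK P dP -> gradOK Q dQ ->
  (forall y, is_derive G y (G1 y)) -> (forall y, is_derive G1 y (G2 y)) ->
  opC i j (prodF P Q G) u v =
  (RtoC (coord i u * coord j v) * (P u * Q v * RtoC (G (nsq u * nsq v)%R)) +
   (dP i u * dQ j v * RtoC (G (nsq u * nsq v)%R)
    + P u * dQ j v * RtoC (G1 (nsq u * nsq v) * (2 * coord i u * nsq v))%R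
    + (dP i u * RtoC (nsq u) + P u * RtoC (2 * coord i u)%R) * Q v * RtoC (2 * coord j v)%R * RtoC (G1 (nsq u * nsq v)%R)
    + P u * RtoC (nsq u) * Q v * RtoC (2 * coord j v) * RtoC (G2 (nsq u * nsq v) * (2 * coord i u * nsq v))%R))%C.
Proof.
  intros. unfold opC. rewrite (dUdV_prodF P dP Q dQ G G1 G2 i j); auto.
Qed.

Lemma Cpp_H L u v : Cpp (H L) u v = (RtoC (2 * INR L + 1) * H (S L) u v)%C.
Proof.
  unfold Cpp, H.
  rewrite !(opC_prodF (zp L) (dzp L) (zp L) (dzp L) _ _ (J L) (J1 L) (J2 L)) by (auto using grad_zp, J_d0, J_d1; lia).
  unfold prodF, zp, dzp, J1, J2. rewrite (J_rec L).
  set (x := nsq u * nsq v).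
  set (j1 := J (S L) x). set (j2 := J (S (S L)) x).
  rewrite !cpow_S.
  destruct (cpow (zeta u) L) as [a1 b1]. destruct (cpow (zeta v) L) as [a2 b2].
  destruct (cpow (zeta u) (pred L)) as [c1' d1']. destruct (cpow (zeta v) (pred L)) as [c2' d2'].
  unfold x, nsq, zeta. simpl dzeta. simpl coord.
  apply C_comp; simpl; field.
Qed.

Definition qf (K : nat) (x : R3) : R := c3 x ^ 2 - nsq x / (2 * INR (S K) + 1).
Definition QL (K : nat) : Fun6 := fun u v =>
  (cpow (zeta u) K * cpow (zeta v) K * RtoC (qf K u * qf K v * J (S (S K)) (nsq u * nsq v)))%C.

Lemma Cmm_H K u v : Cmm (H (S K)) u v =
  (RtoC (4 * INR (S K) ^ 2 / (2 * INR (S K) + 1)) * H K u v + RtoC (2 * INR (S K) + 1) * QL K u v)%C.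
Proof.
  unfold Cmm, H.
  rewrite !(opC_prodF (zp (S K)) (dzp (S K)) (zp (S K)) (dzp (S K)) _ _ (J (S K)) (J1 (S K)) (J2 (S K))) by (auto using grad_zp, J_d0, J_d1; lia).
  unfold QL, prodF, zp, dzp, J1, J2, qf.
  set (x := nsq u * nsq v).
  rewrite (J_rec K x). rewrite (J_rec (S K) x).
  set (j2 := J (S (S K)) x). set (j3 := J (S (S (S K))) x).
  assert (HK : 2 * INR (S K) + 1 <> 0) by (pose proof (pos_INR (S K)); lra).
  rewrite !cpow_S. simpl pred.
  destruct (cpow (zeta u) K) as [a1 b1]. destruct (cpow (zeta v) K) as [a2 b2].
  unfold x, nsq, zeta. simpl dzeta. simpl coord. rewrite !S_INR in *.
  apply C_comp; simpl; field; auto.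
Qed.

Definition LmP (P : R3 -> C) (x : R3) : C := (DopC 3 1 P x - Ci * DopC 3 2 P x)%C.

Lemma Lm_prodF P dP Q l u v : gradOK P dP ->
  Lm (prodF P Q (J l)) u v = (LmP P u * Q v * RtoC (J l (nsq u * nsq v)))%C.
Proof.
  intros HP. rewrite Lm_DopC. unfold prodF, LmP.
  rewrite !(DopC_prod _ _ P (Q v) (J l) (J1 l) (nsq v) u (dP _ u) (dP _ u)) by (auto using J_d0; try lia; apply HP; lia).
  ring.
Qed.

Definition swapF (F : Fun6) : Fun6 := fun u v => F v u.
Definition Lmv (F : Fun6) : Fun6 := fun u v => (Ci * opB 3 1 F u v + 1 * opB 3 2 F u v)%C.

Lemma Lmv_swap F u v : Lmv F u v = Lm (swapF F) v u.
Proof. reflexivity. Qed.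

Lemma swap_prodF P Q G : swapF (prodF P Q G) = prodF Q P G.
Proof.
  apply functional_extensionality; intros u; apply functional_extensionality; intros v.
  unfold swapF, prodF. rewrite Rmult_comm. ring.
Qed.

Lemma Lmv_prodF P Q dQ l u v : gradOK Q dQ ->
  Lmv (prodF P Q (J l)) u v = (P u * LmP Q v * RtoC (J l (nsq u * nsq v)))%C.
Proof.
  intros HQ. rewrite Lmv_swap, swap_prodF, (Lm_prodF Q dQ P l v u HQ). rewrite Rmult_comm. ring.
Qed.

Lemma DopC_val i j P dP x : gradOK P dP -> (1 <= i <= 3)%nat -> (1 <= j <= 3)%nat ->
  DopC i j P x = (RtoC (coord i x) * dP j x - RtoC (coord j x) * dP i x)%C.
Proof. intros HP Hi Hj. unfold DopC. rewrite (pdC_val _ _ _ _ (HP j x Hj)), (pdC_val _ _ _ _ (HP i x Hi)). reflexivity. Qed.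

Lemma LmP_zp L x : LmP (zp (S L)) x = (RtoC (2 * INR (S L)) * (RtoC (c3 x) * zp L x))%C.
Proof.
  unfold LmP. rewrite !(DopC_val _ _ _ (dzp (S L))) by (auto using grad_zp; lia).
  unfold dzp, zp. simpl pred. simpl dzeta. simpl coord.
  destruct (cpow (zeta x) L) as [a b]. rewrite RtoC_mult. apply C_comp; simpl; ring.
Qed.

Definition c3zp (L : nat) (x : R3) : C := (RtoC (c3 x) * zp L x)%C.
Definition dc3zp (L : nat) (k : nat) (x : R3) : C := (RtoC (dlt k) * zp L x + RtoC (c3 x) * dzp L k x)%C.

Lemma grad_c3zp L : gradOK (c3zp L) (dc3zp L).
Proof.
  intros k x Hk. unfold c3zp, dc3zp. apply hasPD_mult; auto.
  apply hasPD_RtoC, hasPDr_c3; auto. apply grad_zp; auto.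
Qed.

Lemma LmP_c3zp K x : LmP (c3zp (S K)) x = (RtoC (2 * INR (S K) + 1) * (RtoC (qf K x) * zp K x))%C.
Proof.
  unfold LmP. rewrite !(DopC_val _ _ _ (dc3zp (S K))) by (auto using grad_c3zp; lia).
  unfold dc3zp, dzp, zp, qf, dlt. simpl pred. simpl dzeta. simpl coord. simpl Nat.eqb. cbv iota.
  rewrite !cpow_S.
  assert (HK : 2 * INR (S K) + 1 <> 0) by (pose proof (pos_INR (S K)); lra).
  destruct (cpow (zeta x) K) as [a b]. unfold zeta, nsq. rewrite !S_INR in *.
  apply C_comp; simpl; field; auto.
Qed.

Definition Winv (W : Fun6 -> Prop) : Prop :=
  is_subspace W /\
  (forall i j : nat, (1 <= i <= 3)%nat -> (1 <= j <= 3)%nat -> forall f, W f -> W (opA i j f)) /\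
  (forall i j : nat, (1 <= i <= 3)%nat -> (1 <= j <= 3)%nat -> forall f, W f -> W (opB i j f)) /\
  (forall i j : nat, (1 <= i <= 3)%nat -> (1 <= j <= 3)%nat -> forall f, W f -> W (opC i j f)).

Lemma W_add (W : Fun6 -> Prop) (f g : Fun6) : Winv W -> W f -> W g -> W (fun u v => (f u v + g u v)%C).
Proof. intros [[_ [H _]] _] Hf Hg. apply H; auto. Qed.
Lemma W_scal (W : Fun6 -> Prop) (c : C) (f : Fun6) : Winv W -> W f -> W (fun u v => (c * f u v)%C).
Proof. intros [[_ [_ H]] _] Hf. apply H; auto. Qed.
Lemma W_ext (W : Fun6 -> Prop) (f g : Fun6) : W f -> (forall u v, f u v = g u v) -> W g.
Proof.
  intros Hf E. replace g with f; auto.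
  apply functional_extensionality; intros u; apply functional_extensionality; intros v; auto.
Qed.
Lemma W_opA W i j f : Winv W -> (1 <= i <= 3)%nat -> (1 <= j <= 3)%nat -> W f -> W (opA i j f).
Proof. intros [_ [H _]] ? ? ?. apply H; auto. Qed.
Lemma W_opB W i j f : Winv W -> (1 <= i <= 3)%nat -> (1 <= j <= 3)%nat -> W f -> W (opB i j f).
Proof. intros [_ [_ [H _]]] ? ? ?. apply H; auto. Qed.
Lemma W_opC W i j f : Winv W -> (1 <= i <= 3)%nat -> (1 <= j <= 3)%nat -> W f -> W (opC i j f).
Proof. intros [_ [_ [_ H]]] ? ? ?. apply H; auto. Qed.

Lemma W_Lp W F : Winv W -> W F -> W (Lp F).
Proof. intros HW HF. unfold Lp. apply W_add; auto; apply W_scal; auto; apply W_opA; auto; lia. Qed.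
Lemma W_Lm W F : Winv W -> W F -> W (Lm F).
Proof. intros HW HF. unfold Lm. apply W_add; auto; apply W_scal; auto; apply W_opA; auto; lia. Qed.
Lemma W_Lmv W F : Winv W -> W F -> W (Lmv F).
Proof. intros HW HF. unfold Lmv. apply W_add; auto; apply W_scal; auto; apply W_opB; auto; lia. Qed.
Definition Lpv (F : Fun6) : Fun6 := fun u v => (Ci * opB 3 1 F u v + (-1) * opB 3 2 F u v)%C.
Lemma W_Lpv W F : Winv W -> W F -> W (Lpv F).
Proof. intros HW HF. unfold Lpv. apply W_add; auto; apply W_scal; auto; apply W_opB; auto; lia. Qed.
Lemma W_Cpp W F : Winv W -> W F -> W (Cpp F).
Proof. intros HW HF. unfold Cpp. repeat apply W_add; auto; repeat apply W_scal; auto; apply W_opC; auto; lia. Qed.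
Lemma W_Cmm W F : Winv W -> W F -> W (Cmm F).
Proof. intros HW HF. unfold Cmm. repeat apply W_add; auto; repeat apply W_scal; auto; apply W_opC; auto; lia. Qed.

Lemma W_unscal (W : Fun6 -> Prop) (c : C) (f g : Fun6) : Winv W -> c <> 0%C -> W f -> (forall u v, f u v = (c * g u v)%C) -> W g.
Proof.
  intros HW Hc Hf E. apply (W_ext W (fun u v => (/ c * f u v)%C)). apply W_scal; auto.
  intros u v. rewrite E. field. auto.
Qed.

Lemma RtoC_neq (r : R) : r <> 0 -> RtoC r <> 0%C.
Proof. intros H E. apply H. injection E. auto. Qed.

Lemma Psi_swapF l m n : valid_lmn l m n -> swapF (Psi l m n) = Psi l n m.
Proof.
  intros H. apply functional_extensionality; intros u; apply functional_extensionality; intros v.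
  unfold swapF. apply Psi_swap; auto.
Qed.

Lemma valid_swap l m n : valid_lmn l m n -> valid_lmn l n m.
Proof. intros [? ?]; split; auto. Qed.

Lemma Lpv_Psi l m n u v : valid_lmn l m n -> (n < Z.of_nat l)%Z ->
  Lpv (Psi l m n) u v = (RtoC (alp l n) * Psi l m (n + 1) u v)%C.
Proof.
  intros H Hn. change (Lpv (Psi l m n) u v) with (Lp (swapF (Psi l m n)) v u).
  rewrite Psi_swapF by auto. rewrite Lp_Psi by (auto using valid_swap).
  rewrite Psi_swap; auto. destruct H; split; lia.
Qed.

Lemma Lmv_Psi l m n u v : valid_lmn l m n -> (- Z.of_nat l < n)%Z ->
  Lmv (Psi l m n) u v = (RtoC (alm l n) * Psi l m (n - 1) u v)%C.
Proof.
  intros H Hn. rewrite Lmv_swap.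
  rewrite Psi_swapF by auto. rewrite Lm_Psi by (auto using valid_swap).
  rewrite Psi_swap; auto. destruct H; split; lia.
Qed.

Lemma raise_m W l m n : Winv W -> valid_lmn l m n -> W (Psi l m n) -> W (Psi l (Z.of_nat l) n).
Proof.
  intros HW H HP. remember (Z.to_nat (Z.of_nat l - m)) as k. revert m H HP Heqk.
  induction k; intros m H HP Hk.
  - replace (Z.of_nat l) with m by (destruct H; lia). auto.
  - assert (Hm : (m < Z.of_nat l)%Z) by lia.
    apply (IHk (m + 1)%Z); [apply valid_succ; auto| |lia].
    apply (W_unscal W (RtoC (alp l m)) (Lp (Psi l m n))); auto.
    apply RtoC_neq, alp_neq; destruct H; lia. apply W_Lp; auto.
    intros; apply Lp_Psi; auto.
Qed.

Lemma raise_n W l m n : Winv W -> valid_lmn l m n -> W (Psi l m n) -> W (Psi l m (Z.of_nat l)).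
Proof.
  intros HW H HP. remember (Z.to_nat (Z.of_nat l - n)) as k. revert n H HP Heqk.
  induction k; intros n H HP Hk.
  - replace (Z.of_nat l) with n by (destruct H; lia). auto.
  - assert (Hn : (n < Z.of_nat l)%Z) by lia.
    apply (IHk (n + 1)%Z); [destruct H; split; lia| |lia].
    apply (W_unscal W (RtoC (alp l n)) (Lpv (Psi l m n))); auto.
    apply RtoC_neq, alp_neq; destruct H; lia. apply W_Lpv; auto.
    intros; apply Lpv_Psi; auto.
Qed.

Lemma lower_m W l m n : Winv W -> valid_lmn l m n -> W (Psi l (Z.of_nat l) n) -> W (Psi l m n).
Proof.
  intros HW H HP. remember (Z.to_nat (Z.of_nat l - m)) as k. revert m H Heqk.
  induction k; intros m H Hk.
  - replace m with (Z.of_nat l) by (destruct H; lia). auto.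
  - assert (Hm : (m < Z.of_nat l)%Z) by lia.
    assert (H' : valid_lmn l (m + 1) n) by (apply valid_succ; auto).
    pose proof (IHk (m + 1)%Z H' ltac:(lia)) as IH.
    apply (W_unscal W (RtoC (alm l (m + 1))) (Lm (Psi l (m + 1) n))); auto.
    apply RtoC_neq, alm_neq; destruct H; lia. apply W_Lm; auto.
    intros. rewrite Lm_Psi by (auto; destruct H; lia). replace (m + 1 - 1)%Z with m by lia. reflexivity.
Qed.

Lemma lower_n W l m n : Winv W -> valid_lmn l m n -> W (Psi l m (Z.of_nat l)) -> W (Psi l m n).
Proof.
  intros HW H HP. remember (Z.to_nat (Z.of_nat l - n)) as k. revert n H Heqk.
  induction k; intros n H Hk.
  - replace n with (Z.of_nat l) by (destruct H; lia). auto.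
  - assert (Hn : (n < Z.of_nat l)%Z) by lia.
    assert (H' : valid_lmn l m (n + 1)) by (destruct H; split; lia).
    pose proof (IHk (n + 1)%Z H' ltac:(lia)) as IH.
    apply (W_unscal W (RtoC (alm l (n + 1))) (Lmv (Psi l m (n + 1)))); auto.
    apply RtoC_neq, alm_neq; destruct H; lia. apply W_Lmv; auto.
    intros. rewrite Lmv_Psi by (auto; destruct H; lia). replace (n + 1 - 1)%Z with n by lia. reflexivity.
Qed.

Definition kap (l : nat) : R := (cf l (Z.of_nat l) * dlegendre l l 0) ^ 2.

Lemma kap_neq l : kap l <> 0.
Proof.
  unfold kap. apply pow_nonzero. apply Rmult_integral_contrapositive_currified.
  apply cf_neq; lia. apply dlegendre_diag_neq.
Qed.

Lemma valid_top l : valid_lmn l (Z.of_nat l) (Z.of_nat l).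
Proof. split; lia. Qed.

Lemma Psi_H l u v : Psi l (Z.of_nat l) (Z.of_nat l) u v = (RtoC (kap l) * H l u v)%C.
Proof.
  rewrite Psi_B by apply valid_top. unfold H, prodF, zp, Bf, Zf, kap, Rk.
  replace (Z.abs_nat (Z.of_nat l)) with l by lia.
  replace (0 <=? Z.of_nat l)%Z with true by (symmetry; apply Z.leb_le; lia).
  rewrite Nat.sub_diag. rewrite !(dlegendre_diag l).
  simpl pow. replace (l + (l + 0))%nat with (2 * l)%nat by lia. rewrite !RtoC_mult. ring.
Qed.

Lemma H_from_Psi W l : Winv W -> W (Psi l (Z.of_nat l) (Z.of_nat l)) -> W (H l).
Proof.
  intros HW HP. apply (W_unscal W (RtoC (kap l)) _ _ HW (RtoC_neq _ (kap_neq l)) HP).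
  intros; apply Psi_H.
Qed.

Lemma Psi_from_H W l : Winv W -> W (H l) -> W (Psi l (Z.of_nat l) (Z.of_nat l)).
Proof.
  intros HW HP. apply (W_ext W (fun u v => (RtoC (kap l) * H l u v)%C)). apply W_scal; auto.
  intros; symmetry; apply Psi_H.
Qed.

Lemma H_up W L : Winv W -> W (H L) -> W (H (S L)).
Proof.
  intros HW HP. apply (W_unscal W (RtoC (2 * INR L + 1)) (Cpp (H L))); auto.
  apply RtoC_neq. pose proof (pos_INR L). lra. apply W_Cpp; auto.
  intros; apply Cpp_H.
Qed.

Lemma W_prodF_Lm W P dP Q l (c : C) P' : Winv W -> gradOK P dP -> c <> 0%C ->
  (forall x, LmP P x = (c * P' x)%C) -> W (prodF P Q (J l)) -> W (prodF P' Q (J l)).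
Proof.
  intros HW HP Hc E HF. apply (W_unscal W c (Lm (prodF P Q (J l)))); auto. apply W_Lm; auto.
  intros u v. rewrite (Lm_prodF P dP Q l u v HP). rewrite E. unfold prodF. ring.
Qed.

Lemma W_prodF_Lmv W P Q dQ l (c : C) Q' : Winv W -> gradOK Q dQ -> c <> 0%C ->
  (forall x, LmP Q x = (c * Q' x)%C) -> W (prodF P Q (J l)) -> W (prodF P Q' (J l)).
Proof.
  intros HW HQ Hc E HF. apply (W_unscal W c (Lmv (prodF P Q (J l)))); auto. apply W_Lmv; auto.
  intros u v. rewrite (Lmv_prodF P Q dQ l u v HQ). rewrite E. unfold prodF. ring.
Qed.

Definition qzp (K : nat) (x : R3) : C := (RtoC (qf K x) * zp K x)%C.

Lemma QL_in W K : Winv W -> W (H (S (S K))) -> W (QL K).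
Proof.
  intros HW HP. unfold H in HP.
  assert (c1 : RtoC (2 * INR (S (S K))) <> 0%C) by (apply RtoC_neq; pose proof (lt_0_INR (S (S K)) ltac:(lia)); lra).
  assert (c2 : RtoC (2 * INR (S K) + 1) <> 0%C) by (apply RtoC_neq; pose proof (pos_INR (S K)); lra).
  assert (A1 : W (prodF (c3zp (S K)) (zp (S (S K))) (J (S (S K))))).
  { apply (W_prodF_Lm W (zp (S (S K))) (dzp (S (S K))) _ _ (RtoC (2 * INR (S (S K))))); auto using grad_zp. intros; apply LmP_zp. }
  assert (A2 : W (prodF (qzp K) (zp (S (S K))) (J (S (S K))))).
  { apply (W_prodF_Lm W (c3zp (S K)) (dc3zp (S K)) _ _ (RtoC (2 * INR (S K) + 1))); auto using grad_c3zp. intros; apply LmP_c3zp. }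
  assert (A3 : W (prodF (qzp K) (c3zp (S K)) (J (S (S K))))).
  { apply (W_prodF_Lmv W _ (zp (S (S K))) (dzp (S (S K))) _ (RtoC (2 * INR (S (S K))))); auto using grad_zp. intros; apply LmP_zp. }
  assert (A4 : W (prodF (qzp K) (qzp K) (J (S (S K))))).
  { apply (W_prodF_Lmv W _ (c3zp (S K)) (dc3zp (S K)) _ (RtoC (2 * INR (S K) + 1))); auto using grad_c3zp. intros; apply LmP_c3zp. }
  apply (W_ext W _ _ A4). intros u v. unfold prodF, qzp, QL, zp. rewrite !RtoC_mult. ring.
Qed.

Lemma H_down W K : Winv W -> W (H (S K)) -> W (H (S (S K))) -> W (H K).
Proof.
  intros HW H1 H2.
  assert (HQ := QL_in W K HW H2).
  assert (a : RtoC (4 * INR (S K) ^ 2 / (2 * INR (S K) + 1)) <> 0%C).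
  { apply RtoC_neq. pose proof (lt_0_INR (S K) ltac:(lia)). pose proof (pos_INR (S K)).
    unfold Rdiv. apply Rmult_integral_contrapositive_currified.
    apply Rmult_integral_contrapositive_currified. lra. apply pow_nonzero; lra.
    apply Rinv_neq_0_compat; lra. }
  apply (W_unscal W _ (fun u v => (Cmm (H (S K)) u v + (- RtoC (2 * INR (S K) + 1)) * QL K u v)%C) _ HW a).
  - apply W_add; auto. apply W_Cmm; auto. apply W_scal; auto.
  - intros u v. rewrite Cmm_H. ring.
Qed.

Lemma all_H W L0 : Winv W -> W (H L0) -> forall L, W (H L).
Proof.
  intros HW H0.
  assert (Up : forall k, W (H (L0 + k))).
  { induction k. rewrite Nat.add_0_r; auto. rewrite Nat.add_succ_r. apply H_up; auto. }
  assert (P : forall k L, (L0 - k <= L)%nat -> W (H L)).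
  { induction k; intros L HL.
    - replace L with (L0 + (L - L0))%nat by lia. apply Up.
    - destruct (le_lt_dec (L0 - k) L) as [h|h]. apply IHk; auto.
      apply H_down; auto; apply IHk; lia. }
  intros L. apply (P L0). lia.
Qed.

Lemma all_Psi W : Winv W -> (forall L, W (H L)) -> forall l m n, valid_lmn l m n -> W (Psi l m n).
Proof.
  intros HW HH l m n Hv.
  apply lower_n; auto. apply lower_m; auto. destruct Hv; split; lia.
  apply Psi_from_H; auto.
Qed.

Record Item := mkI { il : nat; im : Z; iN : Z; ic : C }.
Definition ivalid (it : Item) : Prop := valid_lmn (il it) (im it) (iN it).

Fixpoint sumPsi (xs : list Item) : Fun6 :=
  match xs with
  | nil => zeroF
  | it :: ys => fun u v => (ic it * Psi (il it) (im it) (iN it) u v + sumPsi ys u v)%C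
  end.

Lemma Vphys_sum f : Vphys f -> exists xs, List.Forall ivalid xs /\ f = sumPsi xs.
Proof.
  induction 1.
  - exists nil; split; auto.
  - destruct IHVphys as [xs [Hx E]]. exists (mkI l m n c :: xs). split.
    constructor; auto. subst f. reflexivity.
Qed.

Lemma sumPsi_Vphys xs : List.Forall ivalid xs -> Vphys (sumPsi xs).
Proof.
  induction 1. constructor. destruct x; simpl. apply Vphys_step; auto.
Qed.

Definition goodU (F : Fun6) : Prop :=
  forall u v k, u <> origin -> (1 <= k <= 3)%nat -> exists z, hasPD k (fun w => F w v) u z.

Lemma goodU_Psi l m n : valid_lmn l m n -> goodU (Psi l m n).
Proof.
  intros H u v k Hu Hk.
  destruct (hasPD_cBf l m k u Hk Hu) as [z Hz].
  pose proof (hasPD_prod k _ (RtoC (cf l n) * Bf l n v)%C (J l) (J1 l) (nsq v) u z Hk (J_d0 l) Hz) as K.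
  exists ((z * (RtoC (cf l n) * Bf l n v) * RtoC (J l (nsq u * nsq v)%R) +
       RtoC (cf l m) * Bf l m u * (RtoC (cf l n) * Bf l n v) * RtoC (J1 l (nsq u * nsq v) * (2 * coord k u * nsq v))%R)%C).
  apply (hasPD_ext k _ _ u _ (fun w => eq_sym (Psi_B l m n w v H)) K).
Qed.

Lemma goodU_zero : goodU zeroF.
Proof.
  intros u v k Hu Hk. exists 0%C.
  apply (hasPD_ext k (fun _ => 0%C)); [intros; reflexivity| apply hasPD_const].
Qed.

Lemma goodU_comb (c : C) F G : goodU F -> goodU G -> goodU (fun u v => (c * F u v + G u v)%C).
Proof.
  intros HF HG u v k Hu Hk. destruct (HF u v k Hu Hk) as [a Ha]. destruct (HG u v k Hu Hk) as [b Hb].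
  exists (c * a + b)%C.
  exact (hasPD_plus k (fun w => c * F w v)%C (fun w => G w v) u _ _ (hasPD_scal k c (fun w => F w v) u a Ha) Hb).
Qed.

Lemma goodU_sum xs : List.Forall ivalid xs -> goodU (sumPsi xs).
Proof. induction 1. apply goodU_zero. apply (goodU_comb (ic x)); auto. apply goodU_Psi; auto. Qed.

Lemma opA_lin i j (c : C) F G u v : (1 <= i <= 3)%nat -> (1 <= j <= 3)%nat -> goodU F -> goodU G ->
  opA i j (fun u v => (c * F u v + G u v)%C) u v = (c * opA i j F u v + opA i j G u v)%C.
Proof.
  intros Hi Hj HF HG. rewrite !opA_DopC.
  destruct (R3_eq_dec u origin eq_refl) as [->|Hu].
  - rewrite !DopC_origin. ring.
  - destruct (HF u v i Hu Hi) as [fi Hfi]. destruct (HF u v j Hu Hj) as [fj Hfj].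
    destruct (HG u v i Hu Hi) as [gi Hgi]. destruct (HG u v j Hu Hj) as [gj Hgj].
    unfold DopC.
    rewrite (pdC_val _ _ _ _ (hasPD_plus _ _ _ _ _ _ (hasPD_scal _ c _ _ _ Hfi) Hgi)).
    rewrite (pdC_val _ _ _ _ (hasPD_plus _ _ _ _ _ _ (hasPD_scal _ c _ _ _ Hfj) Hgj)).
    rewrite (pdC_val _ _ _ _ Hfi), (pdC_val _ _ _ _ Hfj), (pdC_val _ _ _ _ Hgi), (pdC_val _ _ _ _ Hgj).
    ring.
Qed.

Lemma opA_zero i j u v : (1 <= i <= 3)%nat -> (1 <= j <= 3)%nat -> opA i j zeroF u v = 0%C.
Proof.
  intros Hi Hj. rewrite opA_DopC. unfold DopC.
  assert (Z : forall k, hasPD k (fun w => zeroF w v) u 0%C)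
    by (intros; apply (hasPD_ext k (fun _ => 0%C)); [intros; reflexivity| apply hasPD_const]).
  rewrite (pdC_val _ _ _ _ (Z i)), (pdC_val _ _ _ _ (Z j)). ring.
Qed.

Definition goodV (F : Fun6) : Prop := goodU (swapF F).

Lemma goodV_sum xs : List.Forall ivalid xs -> goodV (sumPsi xs).
Proof.
  induction 1; simpl. apply goodU_zero. unfold goodV. apply (goodU_comb (ic x)); auto.
  unfold swapF. replace (fun u v => Psi (il x) (im x) (iN x) v u) with (Psi (il x) (iN x) (im x)).
  apply goodU_Psi, valid_swap; auto.
  apply functional_extensionality; intros u; apply functional_extensionality; intros v.
  symmetry; apply Psi_swap; auto.
Qed.

Lemma opB_lin i j (c : C) F G u v : (1 <= i <= 3)%nat -> (1 <= j <= 3)%nat -> goodV F -> goodV G ->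
  opB i j (fun u v => (c * F u v + G u v)%C) u v = (c * opB i j F u v + opB i j G u v)%C.
Proof.
  intros Hi Hj HF HG. change (opB i j (fun u v => (c * F u v + G u v)%C) u v) with
    (opA i j (fun u v => (c * swapF F u v + swapF G u v)%C) v u).
  rewrite opA_lin; auto.
Qed.

Lemma opB_zero i j u v : (1 <= i <= 3)%nat -> (1 <= j <= 3)%nat -> opB i j zeroF u v = 0%C.
Proof. intros. change (opB i j zeroF u v) with (opA i j zeroF v u). apply opA_zero; auto. Qed.

Definition scaleI (e : Item -> C) (it : Item) : Item := mkI (il it) (im it) (iN it) (ic it * e it)%C.

Lemma scaleI_valid e xs : List.Forall ivalid xs -> List.Forall ivalid (map (scaleI e) xs).
Proof. induction 1; simpl; constructor; auto. Qed.

Lemma A12_sum xs u v : List.Forall ivalid xs ->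
  opA 1 2 (sumPsi xs) u v = sumPsi (map (scaleI (fun it => RtoC (IZR (im it)))) xs) u v.
Proof.
  induction 1; simpl.
  - apply opA_zero; lia.
  - rewrite opA_lin by (auto using goodU_Psi, goodU_sum; lia). rewrite IHForall.
    rewrite opA12_Psi by auto. unfold scaleI; simpl. ring.
Qed.

Lemma opB12_Psi l m n u v : valid_lmn l m n -> opB 1 2 (Psi l m n) u v = (RtoC (IZR n) * Psi l m n u v)%C.
Proof.
  intros H. change (opB 1 2 (Psi l m n) u v) with (opA 1 2 (swapF (Psi l m n)) v u).
  rewrite Psi_swapF by auto. rewrite opA12_Psi by (apply valid_swap; auto). rewrite Psi_swap; auto.
  apply valid_swap; auto.
Qed.

Lemma B12_sum xs u v : List.Forall ivalid xs ->
  opB 1 2 (sumPsi xs) u v = sumPsi (map (scaleI (fun it => RtoC (IZR (iN it)))) xs) u v.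
Proof.
  induction 1; simpl.
  - apply opB_zero; lia.
  - rewrite opB_lin by (auto using goodV_sum; try lia; unfold goodV; rewrite Psi_swapF by auto; apply goodU_Psi, valid_swap; auto).
    rewrite IHForall. rewrite opB12_Psi by auto. unfold scaleI; simpl. ring.
Qed.

Lemma Lp_lin (c : C) F G u v : goodU F -> goodU G ->
  Lp (fun u v => (c * F u v + G u v)%C) u v = (c * Lp F u v + Lp G u v)%C.
Proof. intros HF HG. unfold Lp. rewrite !opA_lin by (auto; lia). ring. Qed.
Lemma Lm_lin (c : C) F G u v : goodU F -> goodU G ->
  Lm (fun u v => (c * F u v + G u v)%C) u v = (c * Lm F u v + Lm G u v)%C.
Proof. intros HF HG. unfold Lm. rewrite !opA_lin by (auto; lia). ring. Qed.
Lemma Lp_zero u v : Lp zeroF u v = 0%C.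
Proof. unfold Lp. rewrite !opA_zero by lia. ring. Qed.
Lemma Lm_zero u v : Lm zeroF u v = 0%C.
Proof. unfold Lm. rewrite !opA_zero by lia. ring. Qed.

Lemma Lp_ext F G : (forall u v, F u v = G u v) -> Lp F = Lp G.
Proof.
  intros E. replace G with F; auto.
  apply functional_extensionality; intros u; apply functional_extensionality; intros v; auto.
Qed.

Lemma funext2 (F G : Fun6) : (forall u v, F u v = G u v) -> F = G.
Proof.
  intros E. apply functional_extensionality; intros u; apply functional_extensionality; intros v; auto.
Qed.

Definition stepP (it : Item) : Item :=
  if (im it <? Z.of_nat (il it))%Z then mkI (il it) (im it + 1) (iN it) (ic it * RtoC (alp (il it) (im it)))%C
  else mkI (il it) (im it) (iN it) 0%C.

Lemma stepP_valid it : ivalid it -> ivalid (stepP it).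
Proof.
  unfold stepP, ivalid. destruct it as [l m n c]; simpl. intros H.
  destruct (Z.ltb_spec m (Z.of_nat l)); simpl; auto. apply valid_succ; auto.
Qed.

Lemma stepP_Psi it u v : ivalid it ->
  (ic it * Lp (Psi (il it) (im it) (iN it)) u v)%C =
  (ic (stepP it) * Psi (il (stepP it)) (im (stepP it)) (iN (stepP it)) u v)%C.
Proof.
  destruct it as [l m n c]. unfold stepP, ivalid; simpl. intros H.
  destruct (Z.ltb_spec m (Z.of_nat l)); simpl.
  - rewrite Lp_Psi by auto. ring.
  - replace m with (Z.of_nat l) in * by (destruct H; lia). rewrite Lp_Psi_top by auto. ring.
Qed.

Lemma Lp_sum xs u v : List.Forall ivalid xs -> Lp (sumPsi xs) u v = sumPsi (map stepP xs) u v.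
Proof.
  induction 1.
  - apply Lp_zero.
  - change (sumPsi (x :: l)) with (fun u v => (ic x * Psi (il x) (im x) (iN x) u v + sumPsi l u v)%C).
    rewrite Lp_lin by (auto using goodU_sum; apply goodU_Psi; auto).
    rewrite IHForall. rewrite stepP_Psi by auto. reflexivity.
Qed.

Definition evC (it : Item) : C :=
  RtoC (IZR (im it) * (IZR (im it) + 1) - INR (il it) * (INR (il it) + 1)).

Lemma alp_alm l m : valid_lmn l m 0 -> (m < Z.of_nat l)%Z ->
  alp l m * alm l (m + 1) = IZR m * (IZR m + 1) - INR l * (INR l + 1).
Proof.
  intros H Hm. assert (h1 : cf l m <> 0) by (apply cf_neq; destruct H; lia).
  assert (h2 : cf l (m + 1) <> 0) by (apply cf_neq; destruct H; lia).
  unfold alp, alm. replace (m + 1 - 1)%Z with m by lia.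
  transitivity (betap l m * betam l (m + 1)). field; auto.
  unfold betap, betam.
  destruct (Z.leb_spec 0 m).
  - replace (0 <? m + 1)%Z with true by (symmetry; apply Z.ltb_lt; lia).
    replace (INR (Z.abs_nat (m + 1))) with (IZR m + 1) by (rewrite INR_IZR_INZ; rewrite <- plus_IZR; f_equal; lia).
    ring.
  - replace (0 <? m + 1)%Z with false by (symmetry; apply Z.ltb_ge; lia).
    replace (INR (Z.abs_nat m)) with (- IZR m) by (rewrite INR_IZR_INZ; rewrite <- opp_IZR; f_equal; lia).
    ring.
Qed.

Lemma LL_Psi l m n u v : valid_lmn l m n ->
  Lm (Lp (Psi l m n)) u v = (evC (mkI l m n 1) * Psi l m n u v)%C.
Proof.
  intros H. unfold evC; simpl.
  destruct (Z.ltb_spec m (Z.of_nat l)) as [Hm|Hm].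
  - rewrite (funext2 (Lp (Psi l m n)) (fun u v => (RtoC (alp l m) * Psi l (m + 1) n u v + zeroF u v)%C))
      by (intros; rewrite Lp_Psi by auto; unfold zeroF; ring).
    rewrite Lm_lin; [| apply goodU_Psi, valid_succ; auto | apply goodU_zero].
    rewrite Lm_zero, Lm_Psi; [| apply valid_succ; auto | destruct H; lia].
    replace (m + 1 - 1)%Z with m by lia.
    rewrite <- (alp_alm l m) by (auto; destruct H; split; simpl; lia).
    rewrite RtoC_mult. ring.
  - replace m with (Z.of_nat l) in * by (destruct H; lia).
    rewrite (funext2 (Lp (Psi l (Z.of_nat l) n)) zeroF) by (intros; apply Lp_Psi_top; auto).
    rewrite Lm_zero. rewrite <- INR_IZR_INZ. replace (INR l * (INR l + 1) - INR l * (INR l + 1)) with 0 by ring.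
    ring.
Qed.

Lemma goodU_ext F G : goodU F -> (forall u v, F u v = G u v) -> goodU G.
Proof.
  intros HF E. replace G with F; auto.
  apply functional_extensionality; intros u; apply functional_extensionality; intros v; auto.
Qed.

Lemma stepP_all_valid xs : List.Forall ivalid xs -> List.Forall ivalid (map stepP xs).
Proof. induction 1; simpl; constructor; auto using stepP_valid. Qed.

Lemma LL_sum xs u v : List.Forall ivalid xs -> Lm (Lp (sumPsi xs)) u v = sumPsi (map (scaleI evC) xs) u v.
Proof.
  induction 1 as [|x l Hx Hl IHForall].
  - simpl. rewrite (funext2 (Lp zeroF) zeroF) by (intros; apply Lp_zero). apply Lm_zero.
  - rewrite (funext2 (Lp (sumPsi (x :: l))) (fun u v => (ic x * Lp (Psi (il x) (im x) (iN x)) u v + Lp (sumPsi l) u v)%C)).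
    2:{ intros. change (sumPsi (x :: l)) with (fun u v => (ic x * Psi (il x) (im x) (iN x) u v + sumPsi l u v)%C).
        apply Lp_lin; auto using goodU_sum; apply goodU_Psi; auto. }
    assert (G1 : goodU (Lp (Psi (il x) (im x) (iN x)))).
    { apply (goodU_ext (sumPsi (map stepP (mkI (il x) (im x) (iN x) 1 :: nil)))).
      apply goodU_sum. apply stepP_all_valid. constructor; auto.
      intros. rewrite <- Lp_sum by (constructor; auto).
      f_equal. apply functional_extensionality; intros a; apply functional_extensionality; intros b.
      simpl. unfold zeroF. ring. }
    assert (G2 : goodU (Lp (sumPsi l))).
    { apply (goodU_ext (sumPsi (map stepP l))). apply goodU_sum, stepP_all_valid; auto.
      intros; symmetry; apply Lp_sum; auto. }
    rewrite Lm_lin by auto. rewrite IHForall.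
    destruct x as [l0 m0 n0 c0]. unfold ivalid in Hx; simpl in *.
    rewrite LL_Psi by auto. unfold scaleI, evC; simpl. ring.
Qed.

Definition Ceqb (a b : C) : bool :=
  if Req_EM_T (fst a) (fst b) then (if Req_EM_T (snd a) (snd b) then true else false) else false.

Lemma Ceqb_true a b : Ceqb a b = true -> a = b.
Proof.
  unfold Ceqb. destruct (Req_EM_T (fst a) (fst b)); destruct (Req_EM_T (snd a) (snd b)); try discriminate.
  intros _. apply C_comp; auto.
Qed.
Lemma Ceqb_refl a : Ceqb a a = true.
Proof. unfold Ceqb. destruct (Req_EM_T (fst a) (fst a)); [|tauto]. destruct (Req_EM_T (snd a) (snd a)); tauto. Qed.

Lemma sum_scale_minus (ev : Item -> C) (e : C) xs u v :
  (sumPsi (map (scaleI ev) xs) u v + (- e) * sumPsi xs u v)%C =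
  sumPsi (map (scaleI (fun it => ev it - e)%C) xs) u v.
Proof.
  induction xs as [|a xs IH]; cbn [map sumPsi].
  - unfold zeroF. ring.
  - rewrite <- IH. unfold scaleI; cbn [ic il im iN]. ring.
Qed.

Lemma sum_filter (ev : Item -> C) (e : C) xs u v :
  sumPsi (map (scaleI (fun it => ev it - e)%C) xs) u v =
  sumPsi (map (scaleI (fun it => ev it - e)%C) (filter (fun it => negb (Ceqb (ev it) e)) xs)) u v.
Proof.
  induction xs as [|a xs IH]; [reflexivity|]. cbn [map filter].
  destruct (Ceqb (ev a) e) eqn:E; cbn [negb].
  - cbn [sumPsi]. rewrite IH. apply Ceqb_true in E. unfold scaleI; cbn [ic il im iN]. rewrite E.
    unfold zeroF. ring.
  - cbn [map sumPsi]. rewrite IH. reflexivity.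
Qed.

Lemma filter_lt (p : Item -> bool) xs x : In x xs -> p x = false -> (length (filter p xs) < length xs)%nat.
Proof.
  induction xs; simpl; [tauto|]. intros [->|H] Hp.
  - rewrite Hp. pose proof (filter_length_le p xs). lia.
  - destruct (p a); simpl; specialize (IHxs H Hp); lia.
Qed.

Lemma filter_valid (p : Item -> bool) xs : List.Forall ivalid xs -> List.Forall ivalid (filter p xs).
Proof.
  induction 1; simpl; auto. destruct (p x); auto.
Qed.

Lemma sumPsi_ext xs ys : (forall u v, sumPsi xs u v = sumPsi ys u v) -> sumPsi xs = sumPsi ys.
Proof. apply funext2. Qed.

Lemma split_step W (T : Fun6 -> Fun6) (ev : Item -> C) xs it1 it2 :
  Winv W -> (forall f, W f -> W (T f)) ->
  (forall ys, List.Forall ivalid ys -> forall u v, T (sumPsi ys) u v = sumPsi (map (scaleI ev) ys) u v) ->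
  List.Forall ivalid xs -> In it1 xs -> In it2 xs -> ev it1 <> ev it2 ->
  W (sumPsi xs) -> sumPsi xs <> zeroF ->
  exists ys, List.Forall ivalid ys /\ (length ys < length xs)%nat /\ W (sumPsi ys) /\ sumPsi ys <> zeroF.
Proof.
  intros HW HT HTs Hv I1 I2 Hne Wf Hnz.
  set (ys e := map (scaleI (fun it => ev it - e)%C) (filter (fun it => negb (Ceqb (ev it) e)) xs)).
  assert (Yv : forall e, List.Forall ivalid (ys e)) by (intros; apply scaleI_valid, filter_valid, Hv).
  assert (Yl : forall it, In it xs -> (length (ys it.(ic) ) <= length xs)%nat) by (intros; unfold ys; rewrite length_map; apply filter_length_le).
  assert (Yl1 : forall it, In it xs -> (length (ys (ev it)) < length xs)%nat).
  { intros it Hit. unfold ys. rewrite length_map. apply (filter_lt _ _ it Hit). rewrite Ceqb_refl. reflexivity. }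
  assert (YW : forall e, W (sumPsi (ys e))).
  { intros e. apply (W_ext W (fun u v => (T (sumPsi xs) u v + (- e) * sumPsi xs u v)%C)).
    apply W_add; auto. apply W_scal; auto.
    intros u v. rewrite HTs by auto. rewrite sum_scale_minus. unfold ys. apply sum_filter. }
  assert (YE : forall e u v, sumPsi (ys e) u v = (T (sumPsi xs) u v + (- e) * sumPsi xs u v)%C).
  { intros e u v. rewrite HTs by auto. rewrite sum_scale_minus. unfold ys. symmetry; apply sum_filter. }
  destruct (classic (sumPsi (ys (ev it1)) = zeroF)) as [Z1|Z1].
  - destruct (classic (sumPsi (ys (ev it2)) = zeroF)) as [Z2|Z2].
    + exfalso. apply Hnz. apply funext2. intros u v.
      assert (A1 := f_equal (fun F => F u v) Z1). assert (A2 := f_equal (fun F => F u v) Z2). simpl in A1, A2.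
      rewrite YE in A1, A2. unfold zeroF in *.
      assert (Hd : (ev it2 - ev it1)%C <> 0%C) by (intros E; apply Hne; symmetry; replace (ev it2) with ((ev it2 - ev it1) + ev it1)%C by ring; rewrite E; ring).
      assert (E : ((ev it2 - ev it1) * sumPsi xs u v = 0)%C).
      { transitivity ((T (sumPsi xs) u v + - ev it1 * sumPsi xs u v) - (T (sumPsi xs) u v + - ev it2 * sumPsi xs u v))%C.
        ring. rewrite A1, A2. ring. }
      replace (sumPsi xs u v) with (/ (ev it2 - ev it1) * ((ev it2 - ev it1) * sumPsi xs u v))%C by (field; auto).
      rewrite E. ring.
    + exists (ys (ev it2)). repeat split; auto.
  - exists (ys (ev it1)). repeat split; auto.
Qed.

Fixpoint sumc (xs : list Item) : C := match xs with nil => 0%C | it :: ys => (ic it + sumc ys)%C end.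

Lemma all_same xs l0 m0 n0 :
  (forall it, In it xs -> il it = l0 /\ im it = m0 /\ iN it = n0) ->
  forall u v, sumPsi xs u v = (sumc xs * Psi l0 m0 n0 u v)%C.
Proof.
  induction xs as [|a xs IH]; intros Hs u v; cbn [sumPsi sumc].
  - unfold zeroF. ring.
  - destruct (Hs a (or_introl eq_refl)) as [-> [-> ->]]. rewrite IH by (intros; apply Hs; right; auto). ring.
Qed.

Lemma RtoC_inj (a b : R) : RtoC a = RtoC b -> a = b.
Proof. intros H. injection H. auto. Qed.

Lemma proj W : Winv W -> forall N xs, (length xs <= N)%nat -> List.Forall ivalid xs ->
  W (sumPsi xs) -> sumPsi xs <> zeroF -> exists l m n, valid_lmn l m n /\ W (Psi l m n).
Proof.
  intros HW N. induction N as [|N IH]; intros xs Hlen Hv Wf Hnz.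
  - destruct xs; [contradiction|simpl in Hlen; lia].
  - destruct xs as [|it0 rest]; [contradiction|].
    set (xs := it0 :: rest) in *.
    assert (Rec : forall ys, List.Forall ivalid ys /\ (length ys < length xs)%nat /\ W (sumPsi ys) /\ sumPsi ys <> zeroF ->
                 exists l m n, valid_lmn l m n /\ W (Psi l m n)).
    { intros ys [Y1 [Y2 [Y3 Y4]]]. apply (IH ys); auto. lia. }
    assert (I0 : In it0 xs) by (left; auto).
    destruct (classic (exists it, In it xs /\ im it <> im it0)) as [[it [Hi Hm]]|Nm].
    { assert (T1 : forall f, W f -> W (opA 1 2 f)) by (intros; apply W_opA; auto; lia).
      assert (T2 : forall ys, List.Forall ivalid ys -> forall u v, opA 1 2 (sumPsi ys) u v = sumPsi (map (scaleI (fun it => RtoC (IZR (im it)))) ys) u v)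
        by (intros; apply A12_sum; auto).
      assert (Hne : RtoC (IZR (im it)) <> RtoC (IZR (im it0))) by (intros E; apply Hm; apply eq_IZR, RtoC_inj, E).
      destruct (split_step W _ _ xs it it0 HW T1 T2 Hv Hi I0 Hne Wf Hnz) as [ys Hys]. exact (Rec ys Hys). }
    destruct (classic (exists it, In it xs /\ iN it <> iN it0)) as [[it [Hi Hn]]|Nn].
    { assert (T1 : forall f, W f -> W (opB 1 2 f)) by (intros; apply W_opB; auto; lia).
      assert (T2 : forall ys, List.Forall ivalid ys -> forall u v, opB 1 2 (sumPsi ys) u v = sumPsi (map (scaleI (fun it => RtoC (IZR (iN it)))) ys) u v)
        by (intros; apply B12_sum; auto).
      assert (Hne : RtoC (IZR (iN it)) <> RtoC (IZR (iN it0))) by (intros E; apply Hn; apply eq_IZR, RtoC_inj, E).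
      destruct (split_step W _ _ xs it it0 HW T1 T2 Hv Hi I0 Hne Wf Hnz) as [ys Hys]. exact (Rec ys Hys). }
    assert (Am : forall it, In it xs -> im it = im it0) by (intros it Hi; apply NNPP; intros E; apply Nm; eauto).
    assert (An : forall it, In it xs -> iN it = iN it0) by (intros it Hi; apply NNPP; intros E; apply Nn; eauto).
    destruct (classic (exists it, In it xs /\ il it <> il it0)) as [[it [Hi Hl]]|Nl].
    { assert (T1 : forall f, W f -> W ((fun f => Lm (Lp f)) f)) by (intros; apply W_Lm; auto; apply W_Lp; auto).
      assert (T2 : forall ys, List.Forall ivalid ys -> forall u v, (fun f => Lm (Lp f)) (sumPsi ys) u v = sumPsi (map (scaleI evC) ys) u v)
        by (intros; apply LL_sum; auto).
      assert (Hne : evC it <> evC it0).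
      { intros E. apply Hl. apply RtoC_inj in E. rewrite (Am it Hi) in E.
        assert (E' : INR (il it) * (INR (il it) + 1) = INR (il it0) * (INR (il it0) + 1)) by lra.
        apply INR_eq. pose proof (pos_INR (il it)). pose proof (pos_INR (il it0)).
        destruct (Rtotal_order (INR (il it)) (INR (il it0))) as [h|[h|h]]; auto; nra. }
      destruct (split_step W _ _ xs it it0 HW T1 T2 Hv Hi I0 Hne Wf Hnz) as [ys Hys]. exact (Rec ys Hys). }
    assert (Al : forall it, In it xs -> il it = il it0) by (intros it Hi; apply NNPP; intros E; apply Nl; eauto).
    assert (Hs := all_same xs (il it0) (im it0) (iN it0) (fun it Hi => conj (Al it Hi) (conj (Am it Hi) (An it Hi)))).
    assert (Hc : sumc xs <> 0%C).
    { intros E. apply Hnz. apply funext2. intros u v. rewrite Hs, E. unfold zeroF. ring. }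
    exists (il it0), (im it0), (iN it0). split.
    + inversion Hv; auto.
    + apply (W_unscal W (sumc xs) (sumPsi xs)); auto.
Qed.

Theorem mainTheorem6 (W : Fun6 -> Prop)
  (HW : is_subspace W)
  (Hsub : forall f, W f -> Vphys f)
  (Hnz : exists f, W f /\ f <> zeroF)
  (HA : forall i j : nat, (1 <= i <= 3)%nat -> (1 <= j <= 3)%nat ->
          forall f, W f -> W (opA i j f))
  (HB : forall i j : nat, (1 <= i <= 3)%nat -> (1 <= j <= 3)%nat ->
          forall f, W f -> W (opB i j f))
  (HC : forall i j : nat, (1 <= i <= 3)%nat -> (1 <= j <= 3)%nat ->
          forall f, W f -> W (opC i j f)) :
  forall f, W f <-> Vphys f.
Proof.
  assert (HWi : Winv W) by (repeat split; auto; apply HW).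
  destruct Hnz as [f0 [Wf0 Nf0]].
  destruct (Vphys_sum f0 (Hsub f0 Wf0)) as [xs [Hv E]]. subst f0.
  destruct (proj W HWi (length xs) xs (le_n _) Hv Wf0 Nf0) as [l [m [n [Hlmn WP]]]].
  assert (WH : W (H l)).
  { apply H_from_Psi; auto. apply (raise_n W l (Z.of_nat l) n); auto. destruct Hlmn; split; lia. apply (raise_m W l m n); auto. }
  assert (All := all_Psi W HWi (all_H W l HWi WH)).
  intros f. split; [apply Hsub|].
  induction 1.
  - apply HW.
  - apply W_add; auto. apply W_scal; auto.
Qed.
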